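(* Let $E_B<0$, $\mu>0$, $\tau>-\mu$, and set $\tilde\tau:=\tau/|E_B|$. Then for all $L>0$, $$\Bigl|G_\mu(\tau)-\frac1{4\pi}\log(\tilde\mu+\tilde\tau)\Bigr|\le\frac{K(\tilde\tau,\tilde\mu,\tilde L)}{\tilde L},$$ where $$K(\tilde\tau,\tilde\mu,\tilde L):=1+\frac3{\tilde L}+\frac1{\sqrt{\tilde\mu+\min\{\tilde\tau,1\}}}+\Bigl(\frac{4\sqrt{\tilde\mu}}{\pi}+\frac6{\tilde L}\Bigr)\frac1{\tilde\mu+\min\{\tilde\tau,1\}}.$$
   Context: Let $L>0$ and $\Lambda_L:=\frac{2\pi}{L}\mathbb Z^2$; sums over $k$ run over $\Lambda_L$. Fix $E_B<0$ and $\mu>0$, and set $\tilde\mu:=\mu/|E_B|$, $\tilde L:=L\sqrt{|E_B|}$. For $\tau>-\mu$ let $G_\mu(\tau):=L^{-2}\sum_k\bigl(\frac{1}{k^2-E_B}-\frac{\chi_{(\mu,\infty)}(k^2)}{k^2+\tau}\bigr)$. *)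

(* Defs.v *)
From Stdlib Require Import Reals Lra ZArith.
Open Scope R_scope.

Definition ksq (L : R) (n1 n2 : Z) : R :=
  (2 * PI / L) ^ 2 * (IZR n1 ^ 2 + IZR n2 ^ 2).

Definition chi_gt (mu x : R) : R := if Rlt_dec mu x then 1 else 0.

Definition G_term (L EB mu tau : R) (n1 n2 : Z) : R :=
  / (ksq L n1 n2 - EB) - chi_gt mu (ksq L n1 n2) / (ksq L n1 n2 + tau).

Definition sq_sum (f : Z -> Z -> R) (N : nat) : R :=
  sum_f_R0 (fun i => sum_f_R0 (fun j =>
     f (Z.of_nat i - Z.of_nat N)%Z (Z.of_nat j - Z.of_nat N)%Z) (2 * N)) (2 * N).

Definition G_partial (L EB mu tau : R) (N : nat) : R :=
  / L ^ 2 * sq_sum (G_term L EB mu tau) N.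

Definition Kconst (tt mt Lt : R) : R :=
  1 + 3 / Lt + / sqrt (mt + Rmin tt 1)
  + (4 * sqrt mt / PI + 6 / Lt) * / (mt + Rmin tt 1).

(* Main.v *)
Require Import Defs.
From Stdlib Require Import Reals Lra Lia ZArith.
From Coquelicot Require Import Coquelicot AutoDerive.
Open Scope R_scope.

Definition zsum (g : Z -> R) (N : nat) : R :=
  sum_f_R0 (fun i => g (Z.of_nat i - Z.of_nat N)%Z) (2 * N).

Lemma sq_sum_zsum f N : sq_sum f N = zsum (fun a => zsum (fun b => f a b) N) N.
Proof. reflexivity. Qed.

Lemma zsum_0 g : zsum g 0 = g 0%Z.
Proof. unfold zsum; simpl. reflexivity. Qed.

Lemma zsum_S g N : zsum g (S N) = zsum g N + g (Z.of_nat (S N)) + g (- Z.of_nat (S N))%Z.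
Proof.
  unfold zsum.
  replace (2 * S N)%nat with (S (S (2 * N))) by lia.
  rewrite tech5.
  rewrite (decomp_sum _ (S (2*N))) by lia. simpl pred.
  replace (g (Z.of_nat (S (S (2 * N))) - Z.of_nat (S N))%Z) with (g (Z.of_nat (S N))) by (f_equal; lia).
  replace (g (Z.of_nat 0 - Z.of_nat (S N))%Z) with (g (- Z.of_nat (S N))%Z) by (f_equal; lia).
  rewrite (sum_eq _ (fun i => g (Z.of_nat i - Z.of_nat N)%Z)).
  - replace (N + (N + 0))%nat with (2 * N)%nat by lia. ring.
  - intros i _. f_equal. lia.
Qed.

Lemma zsum_ext g1 g2 N : (forall a, g1 a = g2 a) -> zsum g1 N = zsum g2 N.
Proof. intros H. unfold zsum. apply sum_eq. intros; apply H. Qed.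

Lemma zsum_plus g1 g2 N : zsum (fun a => g1 a + g2 a) N = zsum g1 N + zsum g2 N.
Proof. unfold zsum. apply sum_plus. Qed.

Lemma zsum_scal c g N : zsum (fun a => c * g a) N = c * zsum g N.
Proof. unfold zsum. rewrite scal_sum. apply sum_eq. intros; ring. Qed.

Lemma zsum_le g1 g2 N : (forall a, g1 a <= g2 a) -> zsum g1 N <= zsum g2 N.
Proof. intros H. unfold zsum. apply sum_Rle. intros; apply H. Qed.

Lemma zsum_const c N : zsum (fun _ => c) N = (2 * INR N + 1) * c.
Proof.
  induction N. rewrite zsum_0. simpl; ring.
  rewrite zsum_S, IHN, S_INR. ring.
Qed.

Lemma zsum_abs g N : Rabs (zsum g N) <= zsum (fun a => Rabs (g a)) N.
Proof. unfold zsum. apply sum_f_R0_triangle. Qed.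

Lemma zsum_bound g C N : (forall a, Rabs (g a) <= C) -> Rabs (zsum g N) <= (2 * INR N + 1) * C.
Proof.
  intros H. eapply Rle_trans. apply zsum_abs. rewrite <- zsum_const. apply zsum_le. exact H.
Qed.

Fixpoint nsum (f : nat -> R) (n : nat) : R :=
  match n with O => 0 | S n => nsum f n + f n end.

Lemma nsum_plus f1 f2 n : nsum (fun m => f1 m + f2 m) n = nsum f1 n + nsum f2 n.
Proof. induction n; simpl; [ring| rewrite IHn; ring]. Qed.

Lemma nsum_ext f1 f2 n : (forall m, (m < n)%nat -> f1 m = f2 m) -> nsum f1 n = nsum f2 n.
Proof. induction n; intros H; simpl; auto. rewrite IHn by (intros; apply H; lia). rewrite H by lia. auto. Qed.

Lemma zsum_nsum g n N :
  zsum (fun a => nsum (fun m => g a m) n) N = nsum (fun m => zsum (fun a => g a m) N) n.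
Proof.
  induction n; simpl.
  - rewrite zsum_const; ring.
  - rewrite zsum_plus, IHn. reflexivity.
Qed.

Fixpoint ssum (f : nat -> R) (n : nat) : R :=
  match n with O => 0 | S n => ssum f n + f (S n) end.

Lemma zsum_ssum g N : zsum g N = g 0%Z + ssum (fun k => g (Z.of_nat k) + g (- Z.of_nat k)%Z) N.
Proof.
  induction N. rewrite zsum_0. simpl; ring.
  rewrite zsum_S, IHN. cbn [ssum]. ring.
Qed.

Definition indle (x y : R) : R := if Rle_dec x y then 1 else 0.

Lemma mono_deriv (H dH : R -> R) (a b : R) :
  a <= b -> (forall x, a <= x <= b -> is_derive H x (dH x)) ->
  (forall x, a < x < b -> 0 <= dH x) -> H a <= H b.
Proof.
  intros Hab Hd Hp. destruct (Rle_lt_or_eq_dec _ _ Hab) as [Hlt|Heq].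
  - destruct (MVT_cor2 H dH a b Hlt) as [c [Hc1 Hc2]].
    + intros c Hc. apply is_derive_Reals. apply Hd; lra.
    + assert (0 <= dH c) by (apply Hp; lra). nra.
  - subst; lra.
Qed.

Lemma sqrt_sq_le k y : 0 <= k -> 0 <= y -> (k ^ 2 <= y <-> k <= sqrt y).
Proof.
  intros Hk Hy. pose proof (sqrt_sqrt y Hy). pose proof (sqrt_pos y).
  split; intros; nra.
Qed.

Definition count (N : nat) (y : R) : R := zsum (fun b => indle (IZR b ^ 2) y) N.

Lemma IZR_opp_sq k : IZR (- Z.of_nat k) ^ 2 = INR k ^ 2.
Proof. rewrite opp_IZR, <- INR_IZR_INZ. ring. Qed.

Lemma count_S N y : count (S N) y = count N y + 2 * indle (INR (S N) ^ 2) y.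
Proof.
  unfold count. rewrite zsum_S. rewrite IZR_opp_sq, <- INR_IZR_INZ. ring.
Qed.

Lemma count_ub N y : 0 <= y -> count N y <= 2 * Rmin (INR N) (sqrt y) + 1.
Proof.
  intros Hy. pose proof (sqrt_pos y). induction N.
  - unfold count. rewrite zsum_0. unfold indle. simpl. destruct Rle_dec; unfold Rmin; destruct Rle_dec; lra.
  - rewrite count_S. unfold indle at 1. pose proof (pos_INR N). rewrite S_INR in *.
    destruct Rle_dec as [h|h].
    + apply sqrt_sq_le in h; try lra.
      unfold Rmin in *; destruct Rle_dec; destruct Rle_dec; lra.
    + assert (~ (INR N + 1 <= sqrt y)) by (intro h2; apply h; apply sqrt_sq_le; lra).
      unfold Rmin in *; destruct Rle_dec; destruct Rle_dec; lra.
Qed.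

Lemma count_lb N y : 0 <= y -> 2 * Rmin (INR N) (sqrt y - 1) + 1 <= count N y.
Proof.
  intros Hy. pose proof (sqrt_pos y). induction N.
  - unfold count. rewrite zsum_0. unfold indle. simpl. destruct Rle_dec; unfold Rmin; destruct Rle_dec; lra.
  - rewrite count_S. unfold indle at 1. pose proof (pos_INR N). rewrite S_INR in *.
    destruct Rle_dec as [h|h].
    + apply sqrt_sq_le in h; try lra.
      unfold Rmin in *; destruct Rle_dec; destruct Rle_dec; lra.
    + assert (~ (INR N + 1 <= sqrt y)) by (intro h2; apply h; apply sqrt_sq_le; lra).
      unfold Rmin in *; destruct Rle_dec; destruct Rle_dec; lra.
Qed.

Lemma count_neg N y : y < 0 -> count N y = 0.
Proof.
  intros Hy. unfold count. rewrite <- (Rmult_0_r (2 * INR N + 1)), <- zsum_const.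
  apply zsum_ext. intros a. unfold indle. destruct Rle_dec; auto.
  pose proof (pow2_ge_0 (IZR a)). lra.
Qed.

Lemma count_bounds N y : 0 <= y -> y <= INR N ^ 2 ->
  2 * sqrt y - 1 <= count N y <= 2 * sqrt y + 1.
Proof.
  intros H1 H2. assert (sqrt y <= INR N) by (rewrite <- (sqrt_pow2 (INR N)) by apply pos_INR; apply sqrt_le_1_alt; auto).
  pose proof (count_ub N y H1). pose proof (count_lb N y H1).
  unfold Rmin in *; destruct Rle_dec; destruct Rle_dec; lra.
Qed.

Definition Psi (t th : R) : R := t / 2 * (th + sin th * cos th).
Definition Qf (t x : R) : R := Psi t (asin (x / sqrt t)).

Lemma Psi_deriv t th : is_derive (Psi t) th (t * cos th ^ 2).
Proof.
  unfold Psi. auto_derive; auto. pose proof (sin2_cos2 th) as E. unfold Rsqr in E. assert (E2: sin th * sin th = 1 - cos th * cos th) by lra. transitivity (t / 2 * (1 + cos th * cos th - sin th * sin th)); [ring|]. rewrite E2. field.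
Qed.

Lemma asin_nonneg x : 0 <= x <= 1 -> 0 <= asin x.
Proof.
  intros Hx. destruct (Rle_or_lt 0 (asin x)) as [h|h]; auto.
  pose proof (asin_bound x). pose proof PI_RGT_0.
  assert (sin (asin x) < 0) by (apply sin_lt_0_var; lra).
  rewrite sin_asin in H1; lra.
Qed.

Lemma asin_le x y : -1 <= x -> x <= y -> y <= 1 -> asin x <= asin y.
Proof.
  intros. destruct (Rle_or_lt (asin x) (asin y)) as [h|h]; auto.
  pose proof (asin_bound x). pose proof (asin_bound y).
  assert (sin (asin y) < sin (asin x)) by (apply sin_increasing_1; lra).
  rewrite !sin_asin in H4; lra.
Qed.

Lemma cos_le_mono x y : 0 <= x -> x <= y -> y <= PI -> cos y <= cos x.
Proof.
  intros. destruct (Rle_lt_or_eq_dec _ _ H0). left; apply cos_decreasing_1; lra. subst; lra.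
Qed.

Lemma div_in01 t x : 0 < t -> 0 <= x -> x <= sqrt t -> 0 <= x / sqrt t <= 1.
Proof.
  intros Ht Hx Hxr. pose proof (sqrt_lt_R0 t Ht). split.
  apply Rmult_le_pos; auto. left; apply Rinv_0_lt_compat; auto.
  apply Rmult_le_reg_r with (sqrt t); auto. unfold Rdiv. rewrite Rmult_assoc, Rinv_l; lra.
Qed.

Lemma rcos_asin t x : 0 < t -> 0 <= x -> x <= sqrt t ->
  sqrt t * cos (asin (x / sqrt t)) = sqrt (t - x ^ 2).
Proof.
  intros Ht Hx Hxr. pose proof (sqrt_lt_R0 t Ht). pose proof (sqrt_sqrt t (Rlt_le _ _ Ht)).
  pose proof (div_in01 t x Ht Hx Hxr).
  rewrite cos_asin by lra.
  rewrite <- sqrt_mult_alt by lra. f_equal. unfold Rsqr. replace (x / sqrt t * (x / sqrt t)) with (x ^ 2 / (sqrt t * sqrt t)) by (field; lra). rewrite H0. field. lra.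
Qed.

Lemma rsin_asin t x : 0 < t -> 0 <= x -> x <= sqrt t ->
  sqrt t * sin (asin (x / sqrt t)) = x.
Proof.
  intros Ht Hx Hxr. pose proof (sqrt_lt_R0 t Ht).
  rewrite sin_asin. field. lra.
  split. apply Rle_trans with 0. lra. apply Rmult_le_pos; auto. left; apply Rinv_0_lt_compat; auto.
  apply Rmult_le_reg_r with (sqrt t); auto. unfold Rdiv. rewrite Rmult_assoc, Rinv_l; lra.
Qed.



Lemma Psi_step t x1 x2 : 0 < t -> 0 <= x1 -> x1 <= x2 -> x2 <= sqrt t ->
  (x2 - x1) * sqrt (t - x2 ^ 2) <= Qf t x2 - Qf t x1 <= (x2 - x1) * sqrt (t - x1 ^ 2).
Proof.
  intros Ht H1 H12 H2. pose proof (sqrt_lt_R0 t Ht). pose proof (sqrt_sqrt t (Rlt_le _ _ Ht)).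
  pose proof (div_in01 t x1 Ht H1 ltac:(lra)) as D1.
  pose proof (div_in01 t x2 Ht ltac:(lra) H2) as D2.
  assert (S1 : sqrt t * sin (asin (x1 / sqrt t)) = x1) by (apply rsin_asin; lra).
  assert (S2 : sqrt t * sin (asin (x2 / sqrt t)) = x2) by (apply rsin_asin; lra).
  assert (C1 : sqrt t * cos (asin (x1 / sqrt t)) = sqrt (t - x1 ^ 2)) by (apply rcos_asin; lra).
  assert (C2 : sqrt t * cos (asin (x2 / sqrt t)) = sqrt (t - x2 ^ 2)) by (apply rcos_asin; lra).
  set (r := sqrt t) in *.
  set (th1 := asin (x1 / r)) in *. set (th2 := asin (x2 / r)) in *.
  assert (T1 : 0 <= th1) by (apply asin_nonneg; auto).
  assert (x1 / r <= x2 / r) by (unfold Rdiv; apply Rmult_le_compat_r; [left; apply Rinv_0_lt_compat; lra| lra]).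
  assert (T12 : th1 <= th2) by (apply asin_le; lra).
  assert (T2 : th2 <= PI / 2) by (apply asin_bound).
  pose proof PI_RGT_0.
  unfold Qf. fold r. fold th1 th2.
  split.
  - set (K := r * cos th2).
    assert (M : Psi t th1 - K * (r * sin th1) <= Psi t th2 - K * (r * sin th2)).
    { apply (mono_deriv (fun th => Psi t th - K * (r * sin th)) (fun th => t * cos th ^ 2 - K * (r * cos th))).
      - auto.
      - intros x Hx. apply (is_derive_minus (Psi t) (fun th => K * (r * sin th))).
        apply Psi_deriv. auto_derive; auto. ring.
      - intros x Hx. assert (cos th2 <= cos x) by (apply cos_le_mono; lra).
        assert (0 <= cos th2) by (apply cos_ge_0; lra). unfold K. rewrite <- H0.
        assert (0 <= r * r) by nra. assert (0 <= cos x * (cos x - cos th2)) by nra.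
        replace (r * r * cos x ^ 2 - r * cos th2 * (r * cos x)) with ((r * r) * (cos x * (cos x - cos th2))) by ring.
        apply Rmult_le_pos; auto. }
    rewrite S1, S2 in M. unfold K in M. rewrite C2 in M. nra.
  - set (K := r * cos th1).
    assert (M : K * (r * sin th1) - Psi t th1 <= K * (r * sin th2) - Psi t th2).
    { apply (mono_deriv (fun th => K * (r * sin th) - Psi t th) (fun th => K * (r * cos th) - t * cos th ^ 2)).
      - auto.
      - intros x Hx. apply (is_derive_minus (fun th => K * (r * sin th)) (Psi t)).
        auto_derive; auto. ring. apply Psi_deriv.
      - intros x Hx. assert (cos x <= cos th1) by (apply cos_le_mono; lra).
        assert (0 <= cos x) by (apply cos_ge_0; lra). unfold K. rewrite <- H0.
        assert (0 <= r * r) by nra. assert (0 <= cos x * (cos th1 - cos x)) by nra.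
        replace (r * cos th1 * (r * cos x) - r * r * cos x ^ 2) with ((r * r) * (cos x * (cos th1 - cos x))) by ring.
        apply Rmult_le_pos; auto. }
    rewrite S1, S2 in M. unfold K in M. rewrite C1 in M. nra.
Qed.

Definition Ksum (t : R) (N : nat) : R := ssum (fun k => sqrt (t - INR k ^ 2)) N.

Lemma ssum_le f g N : (forall k, (1 <= k <= N)%nat -> f k <= g k) -> ssum f N <= ssum g N.
Proof.
  induction N; intros H; simpl. lra.
  apply Rplus_le_compat. apply IHN; intros; apply H; lia. apply H; lia.
Qed.

Lemma ssum_tele (D : nat -> R) N : ssum (fun k => D k - D (pred k)) N = D N - D 0%nat.
Proof. induction N; simpl. ring. rewrite IHN. simpl. ring. Qed.

Lemma ssum_shift f N : ssum (fun k => f (pred k)) N = f 0%nat + ssum f N - f N.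
Proof. induction N; simpl. ring. rewrite IHN. simpl. ring. Qed.

Lemma Qf_top t : 0 < t -> Qf t (sqrt t) = PI * t / 4.
Proof.
  intros Ht. unfold Qf, Psi. replace (sqrt t / sqrt t) with 1 by (field; apply Rgt_not_eq, sqrt_lt_R0; auto).
  rewrite asin_1, sin_PI2, cos_PI2. field.
Qed.

Lemma Qf_0 t : Qf t 0 = 0.
Proof. unfold Qf, Psi. unfold Rdiv. rewrite Rmult_0_l, asin_0, sin_0. ring. Qed.

Lemma Ksum_bounds t N : 0 <= t -> sqrt t <= INR N ->
  PI * t / 4 - sqrt t <= Ksum t N <= PI * t / 4.
Proof.
  intros Ht HN. destruct (Rle_lt_or_eq_dec _ _ Ht) as [Hp|H0].
  2:{ subst t. rewrite sqrt_0. unfold Ksum.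
      assert (E : ssum (fun k => sqrt (0 - INR k ^ 2)) N = 0).
      { induction N; cbn [ssum]. auto. rewrite IHN. rewrite sqrt_neg_0. ring.
        all: try (pose proof (pow2_ge_0 (INR (S N))); lra). all: rewrite sqrt_0; pose proof (pos_INR N); lra. }
      rewrite E. lra. }
  set (X := fun k : nat => Rmin (INR k) (sqrt t)).
  set (D := fun k => Qf t (X k)).
  pose proof (sqrt_lt_R0 t Hp) as Hr.
  assert (Hstep : forall k : nat, (1 <= k)%nat ->
     sqrt (t - INR k ^ 2) <= D k - D (pred k) <= sqrt (t - INR (pred k) ^ 2)).
  { intros k Hk. destruct k as [|k]. lia. simpl pred.
    assert (Hx1 : 0 <= X k <= sqrt t).
    { unfold X, Rmin. destruct Rle_dec; pose proof (pos_INR k); lra. }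
    assert (Hx12 : X k <= X (S k)).
    { unfold X, Rmin. rewrite S_INR. destruct Rle_dec; destruct Rle_dec; lra. }
    assert (Hx2 : X (S k) <= sqrt t).
    { unfold X, Rmin. destruct Rle_dec; lra. }
    destruct (Psi_step t (X k) (X (S k)) Hp (proj1 Hx1) Hx12 Hx2) as [L U].
    unfold D. split.
    - eapply Rle_trans; [|exact L].
      destruct (Rle_dec (INR (S k)) (sqrt t)) as [h|h].
      + unfold X, Rmin. destruct Rle_dec; [|lra]. rewrite S_INR in *. destruct Rle_dec; [|lra]. lra.
      + rewrite (sqrt_neg_0 (t - INR (S k) ^ 2)).
        apply Rmult_le_pos. lra. apply sqrt_pos.
        assert (sqrt t < INR (S k)) by lra.
        assert (~ (INR (S k) ^ 2 <= t)) by (intro h2; apply sqrt_sq_le in h2; [lra|apply pos_INR|lra]).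
        lra.
    - eapply Rle_trans; [exact U|].
      destruct (Rle_dec (INR k) (sqrt t)) as [h|h].
      + assert (X k = INR k) by (unfold X, Rmin; destruct Rle_dec; lra). rewrite H.
        rewrite <- (Rmult_1_l (sqrt (t - INR k ^ 2))) at 2.
        apply Rmult_le_compat_r. apply sqrt_pos.
        unfold X, Rmin. rewrite S_INR. destruct Rle_dec; lra.
      + assert (X k = sqrt t) by (unfold X, Rmin; destruct Rle_dec; lra).
        assert (X (S k) = sqrt t) by (unfold X, Rmin; rewrite S_INR; destruct Rle_dec; lra).
        rewrite H, H0. rewrite Rminus_diag, Rmult_0_l. apply sqrt_pos. }
  assert (Tel : ssum (fun k => D k - D (pred k)) N = PI * t / 4).
  { rewrite ssum_tele. unfold D, X. rewrite Rmin_right by auto. rewrite Rmin_left by (simpl; apply sqrt_pos).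
    simpl INR. rewrite Qf_top, Qf_0 by auto. ring. }
  split.
  - assert (ssum (fun k => D k - D (pred k)) N <= ssum (fun k => sqrt (t - INR (pred k) ^ 2)) N)
      by (apply ssum_le; intros; apply Hstep; lia).
    pose proof (ssum_shift (fun k => sqrt (t - INR k ^ 2)) N) as Sh. cbv beta in Sh. rewrite Sh in H. simpl INR in H. rewrite Tel in H. unfold Ksum.
    replace (t - 0 ^ 2) with t in H by ring.
    pose proof (sqrt_pos (t - INR N ^ 2)). lra.
  - assert (ssum (fun k => sqrt (t - INR k ^ 2)) N <= ssum (fun k => D k - D (pred k)) N)
      by (apply ssum_le; intros; apply Hstep; lia).
    unfold Ksum. lra.
Qed.

Lemma ssum_sym t N : ssum (fun k => sqrt (t - IZR (Z.of_nat k) ^ 2) + sqrt (t - IZR (- Z.of_nat k) ^ 2)) N = 2 * Ksum t N.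
Proof.
  unfold Ksum. induction N; cbn [ssum]. ring. rewrite IHN. rewrite IZR_opp_sq, <- INR_IZR_INZ. ring.
Qed.

Lemma zsum_minus g1 g2 N : zsum (fun a => g1 a - g2 a) N = zsum g1 N - zsum g2 N.
Proof. unfold Rminus. rewrite zsum_plus. f_equal. rewrite <- (Rmult_1_l (zsum g2 N)), Ropp_mult_distr_l, <- zsum_scal. apply zsum_ext; intros; ring. Qed.

Definition Acount (N : nat) (t : R) : R :=
  zsum (fun a => zsum (fun b => indle (IZR a ^ 2 + IZR b ^ 2) t) N) N.

Lemma gauss N t : 0 <= t -> t <= INR N ^ 2 -> Rabs (Acount N t - PI * t) <= 4 * sqrt t + 1.
Proof.
  intros H1 H2.
  assert (Hrow : forall a, zsum (fun b => indle (IZR a ^ 2 + IZR b ^ 2) t) N = count N (t - IZR a ^ 2)).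
  { intros a. unfold count. apply zsum_ext. intros b. unfold indle.
    destruct Rle_dec; destruct Rle_dec; auto; lra. }
  assert (Hrow2 : forall a, Rabs (count N (t - IZR a ^ 2) - 2 * sqrt (t - IZR a ^ 2)) <= indle (IZR a ^ 2) t).
  { intros a. unfold indle. destruct Rle_dec as [h|h].
    - pose proof (pow2_ge_0 (IZR a)).
      pose proof (count_bounds N (t - IZR a ^ 2) ltac:(lra) ltac:(lra)). apply Rabs_le; lra.
    - rewrite count_neg by lra. rewrite sqrt_neg_0 by lra. replace (0 - 2 * 0) with 0 by ring. rewrite Rabs_R0. lra. }
  assert (HT : zsum (fun a => sqrt (t - IZR a ^ 2)) N = sqrt t + 2 * Ksum t N).
  { rewrite zsum_ssum. cbv beta. rewrite ssum_sym. replace (IZR 0 ^ 2) with 0 by (simpl; ring).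
    replace (t - 0) with t by ring. auto. }
  assert (HK : sqrt t <= INR N) by (rewrite <- (sqrt_pow2 (INR N)) by apply pos_INR; apply sqrt_le_1_alt; auto).
  pose proof (Ksum_bounds t N H1 HK).
  assert (HA : Rabs (Acount N t - 2 * zsum (fun a => sqrt (t - IZR a ^ 2)) N) <= count N t).
  { assert (E: Acount N t - 2 * zsum (fun a => sqrt (t - IZR a ^ 2)) N = zsum (fun a => count N (t - IZR a ^ 2) - 2 * sqrt (t - IZR a ^ 2)) N).
    { rewrite zsum_minus, zsum_scal. unfold Acount. f_equal. apply zsum_ext; intros; apply Hrow. }
    rewrite E.
    eapply Rle_trans. apply zsum_abs. unfold count. apply zsum_le. intros a. apply Hrow2. }
  pose proof (count_ub N t H1). assert (Rmin (INR N) (sqrt t) <= sqrt t) by apply Rmin_r.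
  rewrite HT in HA. apply Rabs_le. apply Rabs_le_between in HA. lra.
Qed.

Definition cp (a b : Z) : R := IZR a ^ 2 + IZR b ^ 2.

Lemma cp_nat a b : exists k : nat, cp a b = INR k.
Proof.
  exists (Z.to_nat (a * a + b * b)). rewrite INR_IZR_INZ. rewrite Z2Nat.id by nia.
  unfold cp. rewrite plus_IZR, !mult_IZR. ring.
Qed.

Lemma indle_nat k m : indle (INR k) (INR m) = if le_dec k m then 1 else 0.
Proof.
  unfold indle. destruct Rle_dec as [h|h]; destruct le_dec as [h2|h2]; auto.
  - apply INR_le in h. lia.
  - apply le_INR in h2. lra.
Qed.

Lemma tele_ind (v : nat -> R) k M :
  nsum (fun m => indle (INR k) (INR m) * (v m - v (S m))) M = v (Nat.min k M) - v M.
Proof.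
  induction M; cbn [nsum].
  - replace (Nat.min k 0) with 0%nat by lia. ring.
  - rewrite IHM. rewrite indle_nat. destruct le_dec.
    + replace (Nat.min k (S M)) with k by lia. replace (Nat.min k M) with k by lia. ring.
    + replace (Nat.min k (S M)) with (S M) by lia. replace (Nat.min k M) with M by lia. ring.
Qed.

Lemma layer_point (g : R -> R) (c : R) M : (exists k : nat, c = INR k) ->
  indle c (INR M) * g c = indle c (INR M) * g (INR M)
     + nsum (fun m => indle c (INR m) * (g (INR m) - g (INR (S m)))) M.
Proof.
  intros [k ->]. rewrite (tele_ind (fun m => g (INR m))). rewrite indle_nat.
  destruct le_dec. replace (Nat.min k M) with k by lia. ring.
  replace (Nat.min k M) with M by lia. ring.
Qed.

Lemma layer (g : R -> R) N M :
  zsum (fun a => zsum (fun b => indle (cp a b) (INR M) * g (cp a b)) N) N =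
  Acount N (INR M) * g (INR M) + nsum (fun m => Acount N (INR m) * (g (INR m) - g (INR (S m)))) M.
Proof.
  rewrite (zsum_ext _ (fun a => zsum (fun b => indle (cp a b) (INR M) * g (INR M)) N +
      nsum (fun m => zsum (fun b => indle (cp a b) (INR m) * (g (INR m) - g (INR (S m)))) N) M)).
  2:{ intros a. rewrite <- zsum_nsum. rewrite <- zsum_plus. apply zsum_ext. intros b.
      apply layer_point. apply cp_nat. }
  rewrite zsum_plus. f_equal.
  - unfold Acount. rewrite Rmult_comm, <- zsum_scal. apply zsum_ext. intros a.
    rewrite <- zsum_scal. apply zsum_ext. intros b. unfold cp. ring.
  - rewrite zsum_nsum. apply nsum_ext. intros m _. unfold Acount.
    rewrite Rmult_comm, <- zsum_scal. apply zsum_ext. intros a.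
    rewrite <- zsum_scal. apply zsum_ext. intros b. unfold cp. ring.
Qed.

Lemma Acount_const N m x : INR m <= x -> x < INR m + 1 -> Acount N x = Acount N (INR m).
Proof.
  intros H1 H2. unfold Acount. apply zsum_ext. intros a. apply zsum_ext. intros b.
  destruct (cp_nat a b) as [k Hk]. unfold cp in Hk. rewrite Hk.
  unfold indle. destruct Rle_dec as [h|h]; destruct Rle_dec as [h'|h']; auto.
  - exfalso. apply h'. assert (INR k < INR m + 1) by lra. rewrite <- S_INR in H. apply INR_lt in H.
    apply le_INR. lia.
  - lra.
Qed.

Definition uf (k x : R) : R := / (k^2 * x^2 + 1).
Definition psf (k tau x : R) : R := / (k^2 * x^2 + 1) - / (k^2 * x^2 + tau).
Definition duf (k x : R) : R := - (2 * k^2 * x) / (k^2 * x^2 + 1)^2.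
Definition dpsf (k tau x : R) : R := - (2 * k^2 * x) / (k^2 * x^2 + 1)^2 + (2 * k^2 * x) / (k^2 * x^2 + tau)^2.
Definition Pu (k x : R) : R := - PI * x^2 * uf k x + PI / k^2 * ln (k^2 * x^2 + 1).
Definition Pp (k mu tau x : R) : R := - PI * x^2 * psf k tau x
   + PI / k^2 * (ln (k^2 * x^2 + 1) - ln (k^2 * x^2 + tau) + ln (mu + tau)).
Definition Wat (k x : R) : R := 4 * (- x / (k^2 * x^2 + 1) + atan (k * x) / k).
Definition Wu (k x : R) : R := Wat k x + 1 - uf k x.
Definition Bf (k tau x : R) : R :=
  if Rlt_dec 0 tau then atan (k * x / sqrt tau) / (k * sqrt tau) else - / (k * sqrt (k^2 * x^2 + tau)).
Definition Wp (k tau x : R) : R :=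
  if Rle_dec 1 tau then Wat k x - psf k tau x
  else 4 * (- x / (k^2 * x^2 + tau) + Bf k tau x) + psf k tau x.

Lemma d_uf (k x : R) : is_derive (uf k) x (duf k x).
Proof.
  unfold uf, duf. pose proof (pow2_ge_0 (k*x)). auto_derive.
  - nra.
  - field. nra.
Qed.

Lemma d_psf (k tau x : R) : 0 < k^2 * x^2 + tau -> is_derive (psf k tau) x (dpsf k tau x).
Proof.
  intros H. unfold psf, dpsf. pose proof (pow2_ge_0 (k*x)). auto_derive.
  - split; nra.
  - field. split; nra.
Qed.

Lemma d_Pu (k x : R) : 0 < k -> is_derive (Pu k) x (- PI * x^2 * duf k x).
Proof.
  intros Hk. unfold Pu, uf, duf. pose proof (pow2_ge_0 (k*x)). auto_derive.
  - repeat split; nra.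
  - field. split; nra.
Qed.

Lemma d_Pp (k mu tau x : R) : 0 < k -> 0 < k^2 * x^2 + tau -> is_derive (Pp k mu tau) x (- PI * x^2 * dpsf k tau x).
Proof.
  intros Hk H. unfold Pp, psf, dpsf. pose proof (pow2_ge_0 (k*x)). auto_derive.
  - repeat split; nra.
  - field. repeat split; nra.
Qed.

Definition dWat (k x : R) : R := 8 * k^2 * x^2 / (k^2 * x^2 + 1)^2.

Lemma d_Wat (k x : R) : 0 < k -> is_derive (Wat k) x (dWat k x).
Proof.
  intros Hk. unfold Wat, dWat. pose proof (pow2_ge_0 (k*x)). auto_derive.
  - repeat split; nra.
  - field. repeat split; nra.
Qed.

Lemma d_Wu (k x : R) : 0 < k -> is_derive (Wu k) x (dWat k x - duf k x).
Proof.
  intros Hk. unfold Wu, Wat, uf, dWat, duf. pose proof (pow2_ge_0 (k*x)). auto_derive.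
  - repeat split; nra.
  - field. repeat split; nra.
Qed.

Definition dBf (k tau x : R) : R :=
  if Rlt_dec 0 tau then / (k^2 * x^2 + tau) else k * x / ((k^2 * x^2 + tau) * sqrt (k^2 * x^2 + tau)).

Lemma d_atan_s (k s x : R) : 0 < k -> 0 < s -> is_derive (fun x => atan (k * x / s) / (k * s)) x (/ (k^2 * x^2 + s^2)).
Proof.
  intros Hk Hs. pose proof (pow2_ge_0 (k*x)). auto_derive.
  - repeat split; nra.
  - unfold Rsqr. change RinvImpl.Rinv with Rinv. field. split. nra. split. lra.
    assert (0 < s * s + k * x * (k * x)) by nra.
    intro E. field_simplify in E; nra.
Qed.

Lemma d_Bf (k tau x : R) : 0 < k -> 0 < k^2 * x^2 + tau -> is_derive (Bf k tau) x (dBf k tau x).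
Proof.
  intros Hk H. unfold Bf, dBf. destruct (Rlt_dec 0 tau) as [h|h].
  - pose proof (d_atan_s k (sqrt tau) x Hk (sqrt_lt_R0 _ h)).
    rewrite pow2_sqrt in H0 by lra. exact H0.
  - auto_derive.
    + repeat split; auto. apply Rgt_not_eq. apply Rmult_lt_0_compat; auto. apply sqrt_lt_R0; auto.
    + replace (k * (k * 1) * (x * (x * 1)) + tau) with (k ^ 2 * x ^ 2 + tau) by ring.
      pose proof (sqrt_lt_R0 _ H). set (r := sqrt (k ^ 2 * x ^ 2 + tau)) in *.
      assert (E : k ^ 2 * x ^ 2 + tau = r * r) by (unfold r; rewrite sqrt_sqrt; lra).
      clearbody r. rewrite E. field. lra.
Qed.

Definition dWp (k tau x : R) : R :=
  if Rle_dec 1 tau then dWat k x - dpsf k tau x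
  else 4 * ((- / (k^2 * x^2 + tau) + 2 * k^2 * x^2 / (k^2 * x^2 + tau)^2) + dBf k tau x) + dpsf k tau x.

Lemma d_X (k tau x : R) : 0 < k^2 * x^2 + tau ->
  is_derive (fun x => - x / (k^2 * x^2 + tau)) x (- / (k^2 * x^2 + tau) + 2 * k^2 * x^2 / (k^2 * x^2 + tau)^2).
Proof.
  intros H. auto_derive. lra. field. lra.
Qed.

Lemma d_Wp (k tau x : R) : 0 < k -> 0 < k^2 * x^2 + tau -> is_derive (Wp k tau) x (dWp k tau x).
Proof.
  intros Hk H. unfold Wp, dWp. destruct (Rle_dec 1 tau) as [h|h].
  - apply (is_derive_minus (Wat k) (psf k tau)). apply d_Wat; auto. apply d_psf; auto.
  - apply (is_derive_plus (fun x => 4 * (- x / (k ^ 2 * x ^ 2 + tau) + Bf k tau x)) (psf k tau)).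
    + apply (is_derive_scal (fun x => - x / (k ^ 2 * x ^ 2 + tau) + Bf k tau x)).
      apply (is_derive_plus (fun x => - x / (k ^ 2 * x ^ 2 + tau)) (Bf k tau)).
      apply d_X; auto. apply d_Bf; auto.
    + apply d_psf; auto.
Qed.

Lemma ineq_u (k x : R) : 0 < k -> 0 <= x -> (4 * x + 1) * Rabs (duf k x) <= dWat k x - duf k x.
Proof.
  intros Hk Hx. pose proof (pow2_ge_0 (k*x)).
  set (p := / (k^2 * x^2 + 1)).
  assert (Hp : 0 < p) by (unfold p; apply Rinv_0_lt_compat; nra).
  assert (E1 : duf k x = - (2 * k^2 * x) * p^2) by (unfold duf, p; field; nra).
  assert (E2 : dWat k x = 8 * k^2 * x^2 * p^2) by (unfold dWat, p; field; nra).
  rewrite E1, E2. rewrite Rabs_left1.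
  - nra.
  - assert (0 <= 2 * k^2 * x * p^2) by (apply Rmult_le_pos; [nra| nra]). lra.
Qed.

Lemma dBf_ge (k tau x : R) : 0 < k -> 0 <= x -> 0 < k^2 * x^2 + tau -> / (k^2 * x^2 + tau) <= dBf k tau x.
Proof.
  intros Hk Hx H. unfold dBf. destruct Rlt_dec. lra.
  pose proof (sqrt_lt_R0 _ H). set (r := sqrt (k ^ 2 * x ^ 2 + tau)) in *.
  assert (E : k ^ 2 * x ^ 2 + tau = r * r) by (unfold r; rewrite sqrt_sqrt; lra).
  clearbody r. assert (0 <= k * x) by nra. assert (r * r <= (k * x) * (k * x)) by (rewrite <- E; nra).
  rewrite E in *.
  assert (r <= k * x) by nra.
  apply Rmult_le_reg_r with (r * r * r). nra.
  replace (/ (r * r) * (r * r * r)) with r by (field; lra).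
  replace (k * x / (r * r * r) * (r * r * r)) with (k * x) by (field; lra). lra.
Qed.

Lemma ineq_p (k tau x : R) : 0 < k -> 0 <= x -> 0 < k^2 * x^2 + tau ->
  (4 * x + 1) * Rabs (dpsf k tau x) <= dWp k tau x.
Proof.
  intros Hk Hx H. pose proof (pow2_ge_0 (k*x)).
  set (p := / (k^2 * x^2 + 1)). set (q := / (k^2 * x^2 + tau)).
  assert (Hp : 0 < p) by (unfold p; apply Rinv_0_lt_compat; nra).
  assert (Hq : 0 < q) by (unfold q; apply Rinv_0_lt_compat; nra).
  assert (E1 : dpsf k tau x = 2 * k^2 * x * (q^2 - p^2)) by (unfold dpsf, p, q; field; nra).
  assert (Hkx : 0 <= 2 * k^2 * x) by nra.
  unfold dWp. destruct (Rle_dec 1 tau) as [h|h].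
  - assert (q <= p) by (unfold p, q; apply Rinv_le_contravar; nra).
    assert (E2 : dWat k x = 8 * k^2 * x^2 * p^2) by (unfold dWat, p; field; nra).
    rewrite E2, E1. rewrite Rabs_left1.
    + assert (0 <= 2 * k ^ 2 * x * (p^2 - q^2)) by (apply Rmult_le_pos; nra).
      assert (0 <= x * (2 * k ^ 2 * x * q^2)) by (apply Rmult_le_pos; nra). nra.
    + assert (0 <= 2 * k ^ 2 * x * (p^2 - q^2)) by (apply Rmult_le_pos; nra). nra.
  - assert (p <= q) by (unfold p, q; apply Rinv_le_contravar; nra).
    pose proof (dBf_ge k tau x Hk Hx H) as HB. fold q in HB.
    assert (E3 : 2 * k ^ 2 * x ^ 2 / (k ^ 2 * x ^ 2 + tau) ^ 2 = 2 * k^2 * x^2 * q^2) by (unfold q; field; nra).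
    rewrite E3. fold q. rewrite E1. rewrite Rabs_right.
    + assert (0 <= 2 * k ^ 2 * x * (q^2 - p^2)) by (apply Rmult_le_pos; nra).
      assert (0 <= x * (2 * k ^ 2 * x * p^2)) by (apply Rmult_le_pos; nra).
      assert (4*x*(2*k^2*x*(q^2-p^2)) = 8*k^2*x^2*q^2 - 4*(x*(2*k^2*x*p^2))) by ring.
      assert ((4 * x + 1) * (2 * k ^ 2 * x * (q ^ 2 - p ^ 2)) = 4*x*(2*k^2*x*(q^2-p^2)) + 2 * k ^ 2 * x * (q ^ 2 - p ^ 2)) by ring.
      lra.
    + assert (0 <= 2 * k ^ 2 * x * (q^2 - p^2)) by (apply Rmult_le_pos; nra). nra.
Qed.

Lemma gen_step (A : R) (v dv P W dW : R -> R) (al be : R) :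
  al <= be ->
  (forall x, al <= x <= be -> is_derive v x (dv x)) ->
  (forall x, al <= x <= be -> is_derive P x (- PI * x^2 * dv x)) ->
  (forall x, al <= x <= be -> is_derive W x (dW x)) ->
  (forall x, al < x < be -> (4 * x + 1) * Rabs (dv x) <= dW x /\ Rabs (A - PI * x^2) <= 4 * x + 1) ->
  Rabs ((- A * v be) - (- A * v al) - (P be - P al)) <= W be - W al.
Proof.
  intros Hab Hv HP HW Hi.
  assert (Key : forall x, al < x < be -> Rabs ((A - PI * x^2) * dv x) <= dW x).
  { intros x Hx. destruct (Hi x Hx) as [I1 I2]. rewrite Rabs_mult.
    eapply Rle_trans; [|exact I1]. apply Rmult_le_compat_r. apply Rabs_pos. auto. }
  assert (M1 : (- A * v al - P al + W al) <= (- A * v be - P be + W be)).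
  { apply (mono_deriv (fun x => - A * v x - P x + W x) (fun x => - A * dv x - (- PI * x^2 * dv x) + dW x)); auto.
    - intros x Hx. apply (is_derive_plus (fun x => - A * v x - P x) W); [|apply HW; auto].
      apply (is_derive_minus (fun x => - A * v x) P); [|apply HP; auto].
      apply (is_derive_scal v). apply Hv; auto.
    - intros x Hx. pose proof (Key x Hx). apply Rabs_le_between in H. lra. }
  assert (M2 : (A * v al + P al + W al) <= (A * v be + P be + W be)).
  { apply (mono_deriv (fun x => A * v x + P x + W x) (fun x => A * dv x + (- PI * x^2 * dv x) + dW x)); auto.
    - intros x Hx. apply (is_derive_plus (fun x => A * v x + P x) W); [|apply HW; auto].
      apply (is_derive_plus (fun x => A * v x) P); [|apply HP; auto].
      apply (is_derive_scal v). apply Hv; auto.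
    - intros x Hx. pose proof (Key x Hx). apply Rabs_le_between in H. lra. }
  apply Rabs_le. lra.
Qed.

Definition xj (k mu : R) : R := sqrt (mu / k^2).
Definition Jerr (k mu tau : R) : R := (4 * xj k mu + 1) / (mu + tau).
Definition Pm (k mu tau x : R) : R := if Rle_dec x (xj k mu) then Pu k x else Pp k mu tau x.
Definition Wm (k mu tau x : R) : R :=
  if Rle_dec x (xj k mu) then Wu k x else Wu k (xj k mu) + Jerr k mu tau + (Wp k tau x - Wp k tau (xj k mu)).
Definition gc (k mu tau c : R) : R := / (k^2 * c + 1) - chi_gt mu (k^2 * c) / (k^2 * c + tau).

Lemma xj_prop k mu : 0 < k -> 0 < mu -> 0 < xj k mu /\ k^2 * (xj k mu)^2 = mu.
Proof.
  intros Hk Hm. unfold xj. split. apply sqrt_lt_R0. apply Rdiv_lt_0_compat; nra.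
  rewrite pow2_sqrt. field. lra. left; apply Rdiv_lt_0_compat; nra.
Qed.

Lemma le_xj k mu x : 0 < k -> 0 < mu -> 0 <= x -> (x <= xj k mu <-> k^2 * x^2 <= mu).
Proof.
  intros Hk Hm Hx. destruct (xj_prop k mu Hk Hm) as [H1 H2]. set (y := xj k mu) in *.
  split; intros. assert (x^2 <= y^2) by nra. nra.
  destruct (Rle_or_lt x y); auto. assert (y^2 < x^2) by nra. nra.
Qed.

Lemma gc_u k mu tau x : 0 < k -> 0 < mu -> 0 <= x -> x <= xj k mu -> gc k mu tau (x^2) = uf k x.
Proof.
  intros Hk Hm Hx H. apply le_xj in H; auto. unfold gc, uf, chi_gt.
  destruct Rlt_dec. lra. unfold Rdiv. ring.
Qed.

Lemma gc_p k mu tau x : 0 < k -> 0 < mu -> 0 <= x -> xj k mu < x -> gc k mu tau (x^2) = psf k tau x.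
Proof.
  intros Hk Hm Hx H. assert (~ (k^2 * x^2 <= mu)) by (rewrite <- le_xj; auto; lra).
  unfold gc, psf, chi_gt. destruct Rlt_dec. unfold Rdiv. ring. lra.
Qed.

Lemma sqrt_sq_INR m : sqrt (INR m) ^ 2 = INR m.
Proof. rewrite pow2_sqrt; auto. apply pos_INR. Qed.

Lemma gauss_x N m x : (S m <= N * N)%nat -> sqrt (INR m) <= x -> x < sqrt (INR (S m)) ->
  Rabs (Acount N (INR m) - PI * x^2) <= 4 * x + 1.
Proof.
  intros HN H1 H2. pose proof (sqrt_pos (INR m)).
  assert (Hx : 0 <= x) by lra.
  assert (E1 : INR m <= x^2).
  { rewrite <- (sqrt_sq_INR m). nra. }
  assert (E2 : x^2 < INR m + 1).
  { rewrite <- S_INR, <- (sqrt_sq_INR (S m)). nra. }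
  rewrite <- (Acount_const N m (x^2)) by lra.
  replace (4 * x + 1) with (4 * sqrt (x^2) + 1) by (rewrite sqrt_pow2; auto).
  apply gauss. nra.
  apply le_INR in HN. rewrite mult_INR, S_INR in HN. lra.
Qed.

Lemma step_u k mu N m A a b : 0 < k -> 0 < mu -> (S m <= N * N)%nat -> A = Acount N (INR m) ->
  sqrt (INR m) <= a -> a <= b -> b <= sqrt (INR (S m)) -> b <= xj k mu ->
  (b < sqrt (INR (S m)) \/ True) ->
  Rabs ((- A * uf k b) - (- A * uf k a) - (Pu k b - Pu k a)) <= Wu k b - Wu k a.
Proof.
  intros Hk Hm HN HA H1 H2 H3 H4 _. pose proof (sqrt_pos (INR m)).
  apply (gen_step A (uf k) (duf k) (Pu k) (Wu k) (fun x => dWat k x - duf k x)); auto.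
  - intros; apply d_uf.
  - intros; apply d_Pu; auto.
  - intros; apply d_Wu; auto.
  - intros x Hx. split. apply ineq_u; auto. lra. subst A. apply gauss_x; auto; lra.
Qed.

Lemma step_p k mu tau N m A a b : 0 < k -> 0 < mu -> - mu < tau -> (S m <= N * N)%nat -> A = Acount N (INR m) ->
  sqrt (INR m) <= a -> a <= b -> b <= sqrt (INR (S m)) -> xj k mu <= a ->
  Rabs ((- A * psf k tau b) - (- A * psf k tau a) - (Pp k mu tau b - Pp k mu tau a)) <= Wp k tau b - Wp k tau a.
Proof.
  intros Hk Hm Ht HN HA H1 H2 H3 H4. pose proof (sqrt_pos (INR m)).
  destruct (xj_prop k mu Hk Hm) as [X1 X2].
  assert (Hpos : forall x, a <= x <= b -> 0 < k^2 * x^2 + tau).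
  { intros x Hx. assert (xj k mu ^2 <= x^2) by nra. nra. }
  apply (gen_step A (psf k tau) (dpsf k tau) (Pp k mu tau) (Wp k tau) (dWp k tau)); auto.
  - intros; apply d_psf; auto.
  - intros; apply d_Pp; auto.
  - intros; apply d_Wp; auto.
  - intros x Hx. split. apply ineq_p; auto. lra. apply Hpos; lra. subst A. apply gauss_x; auto; lra.
Qed.

Lemma interval k mu tau N m : 0 < k -> 0 < mu -> - mu < tau -> (S m <= N * N)%nat ->
  Rabs (Acount N (INR m) * (gc k mu tau (INR m) - gc k mu tau (INR (S m)))
        - (Pm k mu tau (sqrt (INR (S m))) - Pm k mu tau (sqrt (INR m))))
  <= Wm k mu tau (sqrt (INR (S m))) - Wm k mu tau (sqrt (INR m)).
Proof.
  intros Hk Hm Ht HN.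
  set (A := Acount N (INR m)).
  set (al := sqrt (INR m)). set (be := sqrt (INR (S m))).
  assert (Ea : al = sqrt (INR m)) by reflexivity. assert (Eb : be = sqrt (INR (S m))) by reflexivity.
  assert (Hal : 0 <= al) by apply sqrt_pos.
  assert (Hab : al < be) by (apply sqrt_lt_1; [apply pos_INR|apply pos_INR|rewrite S_INR; lra]).
  assert (E1 : INR m = al^2) by (unfold al; rewrite sqrt_sq_INR; auto).
  assert (E2 : INR (S m) = be^2) by (unfold be; rewrite sqrt_sq_INR; auto).
  rewrite E1, E2.
  destruct (xj_prop k mu Hk Hm) as [X1 X2].
  set (y := xj k mu) in *. assert (Ey : y = xj k mu) by reflexivity.
  unfold Pm, Wm. fold y.
  destruct (Rle_dec be y) as [hb|hb].
  - destruct (Rle_dec al y) as [ha|ha]; [|lra].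
    rewrite gc_u, gc_u by (auto; lra).
    pose proof (step_u k mu N m A al be Hk Hm HN eq_refl ltac:(lra) ltac:(lra) ltac:(lra) hb (or_intror I)).
    replace (A * (uf k al - uf k be) - (Pu k be - Pu k al)) with ((- A * uf k be) - (- A * uf k al) - (Pu k be - Pu k al)) by ring.
    auto.
  - destruct (Rle_dec al y) as [ha|ha].
    + rewrite gc_u by (auto; lra). rewrite gc_p by (auto; lra).
      pose proof (step_u k mu N m A al y Hk Hm HN eq_refl ltac:(lra) ltac:(lra) ltac:(lra) ltac:(lra) (or_intror I)) as S1.
      pose proof (step_p k mu tau N m A y be Hk Hm Ht HN eq_refl ltac:(lra) ltac:(lra) ltac:(lra) ltac:(lra)) as S3.
      assert (S2 : Rabs (A / (mu + tau) - PI * y^2 / (mu + tau)) <= Jerr k mu tau).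
      { unfold Jerr. fold y. replace (A / (mu + tau) - PI * y ^ 2 / (mu + tau)) with ((A - PI * y^2) / (mu + tau)) by (field; lra).
        unfold Rdiv. rewrite Rabs_mult. rewrite (Rabs_right (/ (mu + tau))) by (left; apply Rinv_0_lt_compat; lra).
        apply Rmult_le_compat_r. left; apply Rinv_0_lt_compat; lra.
        unfold A. apply gauss_x; auto; lra. }
      assert (Ej : uf k y - psf k tau y = / (mu + tau)) by (unfold uf, psf; rewrite X2; ring).
      assert (EP : Pp k mu tau y - Pu k y = PI * y^2 / (mu + tau)).
      { unfold Pp, Pu. rewrite X2. replace (psf k tau y) with (uf k y - / (mu + tau)) by lra. field. lra. }
      replace (A * (uf k al - psf k tau be) - (Pp k mu tau be - Pu k al)) with
        (((- A * uf k y) - (- A * uf k al) - (Pu k y - Pu k al)) + (A / (mu + tau) - PI * y^2 / (mu + tau))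
         + ((- A * psf k tau be) - (- A * psf k tau y) - (Pp k mu tau be - Pp k mu tau y))).
      2:{ rewrite <- EP. replace (A / (mu + tau)) with (A * (uf k y - psf k tau y)) by (rewrite Ej; field; lra). ring. }
      eapply Rle_trans. apply Rabs_triang. eapply Rle_trans. apply Rplus_le_compat_r. apply Rabs_triang.
      lra.
    + rewrite gc_p, gc_p by (auto; lra).
      pose proof (step_p k mu tau N m A al be Hk Hm Ht HN eq_refl ltac:(lra) ltac:(lra) ltac:(lra) ltac:(lra)) as S3.
      replace (A * (psf k tau al - psf k tau be) - (Pp k mu tau be - Pp k mu tau al)) with ((- A * psf k tau be) - (- A * psf k tau al) - (Pp k mu tau be - Pp k mu tau al)) by ring.
      lra.
Qed.

Lemma jordan th : 0 <= th <= PI / 2 -> 2 * th / PI <= sin th.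
Proof.
  intros Hth. pose proof PI2_3_2. pose proof PI_4.
  destruct (Rle_or_lt th 1) as [h|h].
  - destruct (sin_bound th 0 ltac:(lra) ltac:(lra)) as [L _].
    unfold sin_approx, sin_term in L. simpl in L.
    assert (2 * th / PI <= th * (5/6)).
    { apply Rmult_le_reg_r with PI. lra. unfold Rdiv. rewrite Rmult_assoc, Rinv_l by lra. nra. }
    nra.
  - set (d := PI / 2 - th).
    destruct (cos_bound d 0 ltac:(unfold d; lra) ltac:(unfold d; lra)) as [L _].
    unfold cos_approx, cos_term in L. simpl in L.
    replace (sin th) with (cos d) by (unfold d; rewrite cos_shift; auto).
    assert (d <= 4 / PI).
    { apply Rmult_le_reg_r with PI. lra. unfold Rdiv. rewrite Rmult_assoc, Rinv_l by lra.
      unfold d. nra. }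
    assert (2 * th / PI = 1 - 2 * d / PI) by (unfold d; field; lra).
    assert (d * d / 2 <= 2 * d / PI).
    { assert (0 <= d) by (unfold d; lra).
      assert (HdP : d * PI <= 4 / PI * PI) by (apply Rmult_le_compat_r; lra).
      replace (4 / PI * PI) with 4 in HdP by (field; lra).
      apply Rmult_le_reg_r with PI. lra.
      replace (2 * d / PI * PI) with (2 * d) by (field; lra).
      replace (d * d / 2 * PI) with (d * (d * PI) / 2) by field.
      nra. }
    lra.
Qed.

Lemma atan_tail z s : 0 < z -> 0 < s ->
  (PI / 2 - atan z) / s <= (PI / 2) / sqrt (z^2 * s^2 + s^2).
Proof.
  intros Hz Hs. pose proof PI_RGT_0.
  set (th := PI / 2 - atan z).
  assert (Hth : 0 <= th <= PI / 2).
  { unfold th. pose proof (atan_bound z). pose proof (atan_increasing 0 z Hz). rewrite atan_0 in H1. lra. }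
  assert (Hs1 : sin th = / sqrt (1 + z^2)).
  { unfold th. rewrite sin_shift. rewrite cos_atan. unfold Rsqr. unfold Rdiv. rewrite Rmult_1_l. f_equal. f_equal. ring. }
  pose proof (jordan th Hth).
  assert (E : sqrt (z^2 * s^2 + s^2) = s * sqrt (1 + z^2)).
  { replace (z^2 * s^2 + s^2) with (s^2 * (1 + z^2)) by ring. rewrite sqrt_mult_alt. rewrite sqrt_pow2; lra.
    nra. }
  rewrite E. pose proof (sqrt_lt_R0 (1 + z^2) ltac:(nra)).
  set (q := sqrt (1 + z ^ 2)) in *.
  rewrite Hs1 in H0.
  apply Rmult_le_reg_r with (s * q). nra.
  replace (th / s * (s * q)) with (th * q) by (field; lra).
  replace (PI / 2 / (s * q) * (s * q)) with (PI / 2) by (field; lra).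
  assert (th <= PI / 2 / q).
  { apply Rmult_le_reg_r with (2 / PI). apply Rdiv_lt_0_compat; lra.
    replace (PI / 2 / q * (2 / PI)) with (/ q) by (field; lra). lra. }
  apply Rmult_le_reg_r with (/ q). apply Rinv_0_lt_compat; lra.
  replace (th * q * / q) with th by (field; lra). lra.
Qed.

Lemma Bf_bound k mu tau X : 0 < k -> 0 < mu -> - mu < tau -> tau < 1 -> xj k mu <= X ->
  Bf k tau X - Bf k tau (xj k mu) <= (PI / 2) / (k * sqrt (mu + tau)).
Proof.
  intros Hk Hm Ht Ht1 HX. destruct (xj_prop k mu Hk Hm) as [X1 X2]. pose proof PI_RGT_0.
  unfold Bf. destruct (Rlt_dec 0 tau) as [h|h].
  - pose proof (sqrt_lt_R0 _ h) as Hs. set (s := sqrt tau) in *.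
    assert (Es : tau = s^2) by (unfold s; rewrite pow2_sqrt; lra).
    set (y := xj k mu) in *.
    assert (Hky : k * y = sqrt mu).
    { rewrite <- (sqrt_pow2 (k * y)) by nra. f_equal. rewrite <- X2. ring. }
    pose proof (atan_bound (k * X / s)).
    assert (atan (k * X / s) / (k * s) - atan (k * y / s) / (k * s) <= (PI / 2 - atan (k * y / s)) / (k * s)).
    { assert (Hd: (atan (k*X/s) - PI/2) / (k*s) <= 0).
      { unfold Rdiv. assert (0 < /(k*s)) by (apply Rinv_0_lt_compat; nra). nra. }
      assert (atan (k * X / s) / (k * s) - atan (k * y / s) / (k * s) - (PI / 2 - atan (k * y / s)) / (k * s)
         = (atan (k*X/s) - PI/2) / (k*s)) by (field; lra).
      lra. }
    eapply Rle_trans. exact H1.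
    set (z := k * y / s).
    assert (Hz : 0 < z) by (unfold z; apply Rdiv_lt_0_compat; nra).
    pose proof (atan_tail z s Hz Hs).
    assert (E2 : z^2 * s^2 + s^2 = mu + tau).
    { unfold z. rewrite Es. replace ((k * y / s) ^ 2 * s ^ 2) with ((k*y)^2) by (field; lra).
      rewrite Hky. rewrite pow2_sqrt; lra. }
    rewrite E2 in H2.
    replace ((PI / 2 - atan z) / (k * s)) with (/ k * ((PI / 2 - atan z) / s)) by (field; lra).
    replace (PI / 2 / (k * sqrt (mu + tau))) with (/ k * (PI / 2 / sqrt (mu + tau))) by (field; split; [apply Rgt_not_eq, sqrt_lt_R0; lra|lra]).
    apply Rmult_le_compat_l. left; apply Rinv_0_lt_compat; lra. auto.
  - set (y := xj k mu) in *.
    assert (Ey : k^2 * y^2 + tau = mu + tau) by lra. rewrite Ey.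
    assert (0 < k^2 * X^2 + tau) by (assert (y^2 <= X^2) by nra; nra).
    pose proof (sqrt_lt_R0 _ H0). pose proof (sqrt_lt_R0 (mu + tau) ltac:(lra)).
    assert (0 < / (k * sqrt (k ^ 2 * X ^ 2 + tau))) by (apply Rinv_0_lt_compat; nra).
    assert (/ (k * sqrt (mu + tau)) <= PI / 2 / (k * sqrt (mu + tau))).
    { unfold Rdiv. rewrite <- (Rmult_1_l (/ (k * sqrt (mu + tau)))) at 1. apply Rmult_le_compat_r.
      left; apply Rinv_0_lt_compat; nra. pose proof PI2_3_2. lra. }
    lra.
Qed.

Lemma Rdiv_le_0_compat a b : 0 <= a -> 0 < b -> 0 <= a / b.
Proof. intros. unfold Rdiv. apply Rmult_le_pos; auto. left; apply Rinv_0_lt_compat; auto. Qed.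

Definition Btot (k mu tau : R) : R :=
  let a := mu + Rmin tau 1 in
  2 * PI / k * (1 + / sqrt a) + 1 + 2 / a + 8 * xj k mu / a.

Lemma atan_nonneg x : 0 <= x -> 0 <= atan x.
Proof. intros. destruct (Req_dec x 0). subst; rewrite atan_0; lra. left. rewrite <- atan_0. apply atan_increasing. lra. Qed.

Lemma Wat_le k x : 0 < k -> 0 <= x -> Wat k x <= 2 * PI / k.
Proof.
  intros Hk Hx. unfold Wat. pose proof (atan_bound (k * x)). pose proof (pow2_ge_0 (k*x)).
  assert (0 <= x / (k^2 * x^2 + 1)) by (apply Rdiv_le_0_compat; nra).
  assert (atan (k * x) / k <= PI / 2 / k) by (unfold Rdiv; apply Rmult_le_compat_r; [left; apply Rinv_0_lt_compat; lra|lra]).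
  replace (2 * PI / k) with (4 * (PI / 2 / k)) by (field; lra).
  unfold Rdiv in *. lra.
Qed.

Lemma Wm_bound k mu tau X : 0 < k -> 0 < mu -> - mu < tau -> xj k mu < X ->
  Wm k mu tau X - Wm k mu tau 0 <= Btot k mu tau.
Proof.
  intros Hk Hm Ht HX. destruct (xj_prop k mu Hk Hm) as [X1 X2]. pose proof PI_RGT_0.
  unfold Wm. destruct (Rle_dec 0 (xj k mu)) as [_|h]; [|lra].
  destruct (Rle_dec X (xj k mu)) as [h|_]; [lra|].
  set (y := xj k mu) in *. assert (Eyy : y = xj k mu) by reflexivity.
  assert (W0 : Wu k 0 = 0) by (unfold Wu, Wat, uf; rewrite Rmult_0_r, atan_0; field; lra).
  rewrite W0.
  set (a := mu + Rmin tau 1).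
  assert (Ha1 : a <= mu + tau) by (unfold a; pose proof (Rmin_l tau 1); lra).
  assert (Ha0 : 0 < a) by (unfold a, Rmin; destruct Rle_dec; lra).
  assert (HJ : Jerr k mu tau <= (4 * y + 1) / a).
  { unfold Jerr. fold y. unfold Rdiv. apply Rmult_le_compat_l. lra. apply Rinv_le_contravar; lra. }
  assert (Huy : uf k y = / (mu + 1)) by (unfold uf; rewrite X2; auto).
  assert (Hpy : Rabs (psf k tau y) <= / a).
  { unfold psf. rewrite X2. unfold a, Rmin. destruct Rle_dec as [h|h].
    - replace (/ (mu + 1) - / (mu + tau)) with (- ((1 - tau) / ((mu + 1) * (mu + tau)))) by (field; lra).
      rewrite Rabs_Ropp. rewrite Rabs_right. 2:{ apply Rle_ge, Rdiv_le_0_compat; nra. }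
      apply Rmult_le_reg_r with ((mu + 1) * (mu + tau)). nra.
      replace ((1 - tau) / ((mu + 1) * (mu + tau)) * ((mu + 1) * (mu + tau))) with (1 - tau) by (field; lra).
      replace (/ (mu + tau) * ((mu + 1) * (mu + tau))) with (mu + 1) by (field; lra). lra.
    - replace (/ (mu + 1) - / (mu + tau)) with ((tau - 1) / ((mu + 1) * (mu + tau))) by (field; lra).
      rewrite Rabs_right. 2:{ apply Rle_ge, Rdiv_le_0_compat; nra. }
      apply Rmult_le_reg_r with ((mu + 1) * (mu + tau)). nra.
      replace ((tau - 1) / ((mu + 1) * (mu + tau)) * ((mu + 1) * (mu + tau))) with (tau - 1) by (field; lra).
      replace (/ (mu + 1) * ((mu + 1) * (mu + tau))) with (mu + tau) by (field; lra). lra. }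
  assert (HkX : 0 < k^2 * X^2 + tau) by (assert (y^2 <= X^2) by nra; nra).
  assert (Hsa : 0 <= / sqrt a) by (left; apply Rinv_0_lt_compat, sqrt_lt_R0; auto).
  assert (Hya : 0 <= y / a) by (apply Rdiv_le_0_compat; lra).
  unfold Btot. fold a. unfold Wu, Wp.
  destruct (Rle_dec 1 tau) as [h|h].
  - assert (0 <= psf k tau X).
    { unfold psf. assert (/ (k ^ 2 * X ^ 2 + tau) <= / (k ^ 2 * X ^ 2 + 1)) by (apply Rinv_le_contravar; nra). lra. }
    pose proof (Wat_le k X Hk ltac:(lra)). pose proof (Rle_abs (psf k tau y)).
    assert (0 <= 2 * PI / k * / sqrt a) by (apply Rmult_le_pos; [apply Rdiv_le_0_compat; lra| auto]).
    unfold Rdiv in *. rewrite Huy. assert (0 < / (mu + 1)) by (apply Rinv_0_lt_compat; lra).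
    fold y. replace (2 * PI * / k * (1 + / sqrt a)) with (2*PI*/k + 2*PI*/k*/sqrt a) by ring.
    replace ((4 * y + 1) * / a) with (4 * (y * / a) + / a) in HJ by ring.
    replace (8 * y * / a) with (8 * (y * / a)) by ring. lra.
  - assert (psf k tau X <= 0).
    { unfold psf. assert (/ (k ^ 2 * X ^ 2 + 1) <= / (k ^ 2 * X ^ 2 + tau)) by (apply Rinv_le_contravar; nra). lra. }
    pose proof (Wat_le k y Hk ltac:(lra)). pose proof (Rabs_Ropp (psf k tau y)). pose proof (Rle_abs (- psf k tau y)).
    pose proof (Bf_bound k mu tau X Hk Hm Ht ltac:(lra) ltac:(lra)) as H5. fold y in H5.
    assert (Ea : a = mu + tau) by (unfold a, Rmin; destruct Rle_dec; lra).
    rewrite <- Ea in H5.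
    assert (E1 : PI / 2 / (k * sqrt a) = 2 * PI / k * / sqrt a / 4) by (field; split; [apply Rgt_not_eq, sqrt_lt_R0; lra| lra]).
    rewrite E1 in H5.
    assert (0 <= X / (k ^ 2 * X ^ 2 + tau)) by (apply Rdiv_le_0_compat; lra).
    assert (Ey : y / (k^2 * y^2 + tau) = y / a) by (rewrite X2, Ea; auto).
    rewrite Huy. assert (0 < / (mu + 1)) by (apply Rinv_0_lt_compat; lra).
    unfold Rdiv in *. fold y. replace (2 * PI * / k * (1 + / sqrt a)) with (2*PI*/k + 2*PI*/k*/sqrt a) by ring.
    replace ((4 * y + 1) * / a) with (4 * (y * / a) + / a) in HJ by ring.
    replace (8 * y * / a) with (8 * (y * / a)) by ring.
    replace (- y * / (k^2*y^2+tau)) with (-(y * /(k^2*y^2+tau))) by ring. rewrite Ey.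
    replace (- X * / (k^2*X^2+tau)) with (-(X * /(k^2*X^2+tau))) by ring.
    lra.
Qed.

Lemma xj_val L mu : 0 < L -> 0 < mu -> xj (2 * PI / L) mu = sqrt mu * L / (2 * PI).
Proof.
  intros HL Hm. pose proof PI_RGT_0. unfold xj.
  replace (mu / (2 * PI / L) ^ 2) with ((sqrt mu * L / (2 * PI))^2).
  rewrite sqrt_pow2; auto. apply Rdiv_le_0_compat. apply Rmult_le_pos. apply sqrt_pos. lra. lra.
  replace ((sqrt mu * L / (2 * PI)) ^ 2) with ((sqrt mu)^2 * L^2 / (2*PI)^2) by (field; lra).
  rewrite pow2_sqrt by lra. field. lra.
Qed.

Lemma Btot_K L mu tau : 0 < L -> 0 < mu -> - mu < tau ->
  / L ^ 2 * Btot (2 * PI / L) mu tau + 2 / L ^ 2 <= Kconst tau mu L / L.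
Proof.
  intros HL Hm Ht. pose proof PI_RGT_0.
  unfold Btot, Kconst. rewrite xj_val by auto.
  set (a := mu + Rmin tau 1).
  assert (Ha0 : 0 < a) by (unfold a, Rmin; destruct Rle_dec; lra).
  pose proof (sqrt_lt_R0 a Ha0).
  assert (E : / L ^ 2 * (2 * PI / (2 * PI / L) * (1 + / sqrt a) + 1 + 2 / a + 8 * (sqrt mu * L / (2 * PI)) / a) + 2 / L ^ 2
     = (1 + 3 / L + / sqrt a + (4 * sqrt mu / PI + 6 / L) * / a) / L - 4 / (a * L^2)) by (field; repeat split; try lra; match goal with |- ?G => idtac G end).
  rewrite E. assert (0 < a * L^2) by (apply Rmult_lt_0_compat; [lra| apply pow_lt; lra]). assert (0 < 4 / (a * L^2)) by (apply Rdiv_lt_0_compat; lra). lra.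
Qed.

Lemma tele_abs (a : nat -> R) (P W : R -> R) (y : nat -> R) M :
  (forall m, (m < M)%nat -> Rabs (a m - (P (y (S m)) - P (y m))) <= W (y (S m)) - W (y m)) ->
  Rabs (nsum a M - (P (y M) - P (y 0%nat))) <= W (y M) - W (y 0%nat).
Proof.
  induction M; intros H; cbn [nsum].
  - replace (0 - (P (y 0%nat) - P (y 0%nat))) with 0 by ring. rewrite Rabs_R0. lra.
  - replace (nsum a M + a M - (P (y (S M)) - P (y 0%nat))) with
      ((nsum a M - (P (y M) - P (y 0%nat))) + (a M - (P (y (S M)) - P (y M)))) by ring.
    eapply Rle_trans. apply Rabs_triang.
    pose proof (IHM ltac:(intros; apply H; lia)). pose proof (H M ltac:(lia)). lra.
Qed.

Lemma G_term_gc L mu tau a b : G_term L (-1) mu tau a b = gc (2 * PI / L) mu tau (cp a b).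
Proof.
  unfold G_term, gc, ksq, cp. f_equal. f_equal. ring.
Qed.

Definition Outs (k mu tau : R) (N : nat) : R :=
  zsum (fun a => zsum (fun b => (1 - indle (cp a b) (INR (N * N))) * gc k mu tau (cp a b)) N) N.

Lemma sqrt_NN N : sqrt (INR (N * N)) = INR N.
Proof. rewrite mult_INR. apply sqrt_square. apply pos_INR. Qed.

Lemma main_bound L mu tau N : 0 < L -> 0 < mu -> - mu < tau -> xj (2 * PI / L) mu < INR N ->
  let k := 2 * PI / L in
  Rabs (G_partial L (-1) mu tau N - / (4 * PI) * ln (mu + tau)) <=
    / L ^ 2 * Btot k mu tau
    + (/ L ^ 2 * (Rabs (Acount N (INR (N * N)) - PI * INR N ^ 2) * Rabs (psf k tau (INR N)) + Rabs (Outs k mu tau N))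
       + / (4 * PI) * Rabs (ln (k ^ 2 * INR N ^ 2 + 1) - ln (k ^ 2 * INR N ^ 2 + tau))).
Proof.
  intros HL Hm Ht HN k. fold k in HN. pose proof PI_RGT_0.
  assert (Hk : 0 < k) by (unfold k; apply Rdiv_lt_0_compat; lra).
  destruct (xj_prop k mu Hk Hm) as [X1 X2].
  set (M := (N * N)%nat).
  assert (Hsq : sq_sum (G_term L (-1) mu tau) N =
     zsum (fun a => zsum (fun b => indle (cp a b) (INR M) * gc k mu tau (cp a b)) N) N + Outs k mu tau N).
  { rewrite sq_sum_zsum. unfold Outs. fold M. rewrite <- zsum_plus. apply zsum_ext. intros a.
    rewrite <- zsum_plus. apply zsum_ext. intros b. rewrite G_term_gc. fold k. ring. }
  rewrite layer in Hsq.
  pose proof (tele_abs (fun m => Acount N (INR m) * (gc k mu tau (INR m) - gc k mu tau (INR (S m))))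
     (Pm k mu tau) (Wm k mu tau) (fun m => sqrt (INR m)) M) as T.
  cbv beta in T.
  assert (T2 : Rabs (nsum (fun m => Acount N (INR m) * (gc k mu tau (INR m) - gc k mu tau (INR (S m)))) M
     - (Pm k mu tau (sqrt (INR M)) - Pm k mu tau (sqrt (INR 0)))) <= Wm k mu tau (sqrt (INR M)) - Wm k mu tau (sqrt (INR 0))).
  { apply T. intros m Hm'. apply interval; auto. }
  clear T.
  rewrite INR_0, sqrt_0 in T2. unfold M in T2. rewrite sqrt_NN in T2. fold M in T2.
  pose proof (Wm_bound k mu tau (INR N) Hk Hm Ht HN) as WB.
  assert (P0 : Pm k mu tau 0 = 0).
  { unfold Pm. destruct Rle_dec; [|lra]. unfold Pu, uf. replace (k ^ 2 * 0 ^ 2 + 1) with 1 by ring. rewrite ln_1. field. lra. }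
  assert (PN : Pm k mu tau (INR N) = Pp k mu tau (INR N)) by (unfold Pm; destruct Rle_dec; lra).
  rewrite P0, PN in T2.
  assert (GM : gc k mu tau (INR M) = psf k tau (INR N)).
  { unfold M. rewrite mult_INR. replace (INR N * INR N) with (INR N ^ 2) by ring. apply gc_p; auto. apply pos_INR. }
  rewrite GM in Hsq.
  unfold G_partial. rewrite Hsq.
  set (A := Acount N (INR M)) in *. set (ns := nsum _ M) in *. set (O := Outs k mu tau N) in *.
  set (p := psf k tau (INR N)) in *. set (l1 := ln (k ^ 2 * INR N ^ 2 + 1)). set (l2 := ln (k ^ 2 * INR N ^ 2 + tau)).
  assert (EPp : Pp k mu tau (INR N) = - PI * INR N ^ 2 * p + PI / k^2 * (l1 - l2 + ln (mu + tau))) by reflexivity.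
  rewrite EPp in T2.
  assert (Ekk : / L ^ 2 * (PI / k ^ 2) = / (4 * PI)) by (unfold k; field; lra).
  set (e := ns - (- PI * INR N ^ 2 * p + PI / k ^ 2 * (l1 - l2 + ln (mu + tau)) - 0)) in *.
  replace (/ L ^ 2 * (A * p + ns + O) - / (4 * PI) * ln (mu + tau)) with
    (/ L ^ 2 * e + (/ L ^ 2 * ((A - PI * INR N ^ 2) * p + O) + / (4 * PI) * (l1 - l2))).
  2:{ unfold e. rewrite <- Ekk. field. lra. }
  assert (HL2 : 0 < / L ^ 2) by (apply Rinv_0_lt_compat; apply pow_lt; lra).
  eapply Rle_trans. apply Rabs_triang. apply Rplus_le_compat.
  - rewrite Rabs_mult, (Rabs_right (/ L ^ 2)) by lra. apply Rmult_le_compat_l. lra. lra.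
  - eapply Rle_trans. apply Rabs_triang. apply Rplus_le_compat.
    + rewrite Rabs_mult, (Rabs_right (/ L ^ 2)) by lra. apply Rmult_le_compat_l. lra.
      eapply Rle_trans. apply Rabs_triang. rewrite Rabs_mult. lra.
    + rewrite Rabs_mult. rewrite (Rabs_right (/ (4 * PI))). lra. left; apply Rinv_0_lt_compat; lra.
Qed.

Lemma abs_between x : - Rabs x <= x <= Rabs x.
Proof. split. pose proof (Rle_abs (-x)). rewrite Rabs_Ropp in H. lra. apply Rle_abs. Qed.

Lemma psf_like_bound s tau : 2 * Rabs tau + 2 <= s ->
  Rabs (/ (s + 1) - / (s + tau)) <= 2 * Rabs (tau - 1) / s ^ 2.
Proof.
  intros Hs. pose proof (Rabs_pos tau). pose proof (abs_between tau).
  assert (Hs2 : s / 2 <= s + tau) by lra.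
  replace (/ (s + 1) - / (s + tau)) with ((tau - 1) / ((s + 1) * (s + tau))) by (field; lra).
  unfold Rdiv. rewrite Rabs_mult. rewrite (Rabs_right (/ ((s + 1) * (s + tau)))) by (left; apply Rinv_0_lt_compat; nra).
  replace (2 * Rabs (tau - 1) * / s ^ 2) with (Rabs (tau - 1) * (2 * / s^2)) by ring.
  apply Rmult_le_compat_l. apply Rabs_pos.
  replace (2 * / s ^ 2) with (/ (s * (s / 2))) by (field; lra).
  apply Rinv_le_contravar. nra. nra.
Qed.

Lemma ln_le_minus1 z : 0 < z -> ln z <= z - 1.
Proof. intros. pose proof (exp_ineq1_le (ln z)). rewrite exp_ln in H0; lra. Qed.

Lemma ln_diff_bound s tau : 2 * Rabs tau + 2 <= s ->
  Rabs (ln (s + 1) - ln (s + tau)) <= 2 * Rabs (tau - 1) / s.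
Proof.
  intros Hs. pose proof (Rabs_pos tau). pose proof (abs_between tau).
  assert (Hs2 : s / 2 <= s + tau) by lra.
  assert (Hp1 : 0 < s + 1) by lra. assert (Hp2 : 0 < s + tau) by lra.
  rewrite <- ln_div by auto.
  assert (U : ln ((s + 1) / (s + tau)) <= (1 - tau) / (s + tau)).
  { eapply Rle_trans. apply ln_le_minus1. apply Rdiv_lt_0_compat; auto. right. field. lra. }
  assert (Lo : - ((tau - 1) / (s + 1)) <= ln ((s + 1) / (s + tau))).
  { replace ((s + 1) / (s + tau)) with (/ ((s + tau) / (s + 1))) by (field; lra).
    rewrite ln_Rinv by (apply Rdiv_lt_0_compat; auto).
    apply Ropp_le_contravar. eapply Rle_trans. apply ln_le_minus1. apply Rdiv_lt_0_compat; auto. right. field. lra. }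
  assert (A1 : Rabs ((1 - tau) / (s + tau)) <= 2 * Rabs (tau - 1) / s).
  { unfold Rdiv. rewrite Rabs_mult, (Rabs_right (/ (s + tau))) by (left; apply Rinv_0_lt_compat; lra).
    replace (1 - tau) with (- (tau - 1)) by ring. rewrite Rabs_Ropp.
    replace (2 * Rabs (tau - 1) * / s) with (Rabs (tau - 1) * (2 * / s)) by ring.
    apply Rmult_le_compat_l. apply Rabs_pos. replace (2 * / s) with (/ (s / 2)) by (field; lra).
    apply Rinv_le_contravar; lra. }
  assert (A2 : Rabs ((tau - 1) / (s + 1)) <= 2 * Rabs (tau - 1) / s).
  { unfold Rdiv. rewrite Rabs_mult, (Rabs_right (/ (s + 1))) by (left; apply Rinv_0_lt_compat; lra).
    replace (2 * Rabs (tau - 1) * / s) with (Rabs (tau - 1) * (2 * / s)) by ring.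
    apply Rmult_le_compat_l. apply Rabs_pos. replace (2 * / s) with (/ (s / 2)) by (field; lra).
    apply Rinv_le_contravar; lra. }
  apply Rabs_le_between in A1. apply Rabs_le_between in A2. apply Rabs_le. lra.
Qed.

Lemma gc_bound k mu tau c X : 0 < k -> 0 < mu -> 0 <= X -> X ^ 2 <= c -> 2 * Rabs tau + 2 + mu <= k ^ 2 * X ^ 2 ->
  Rabs (gc k mu tau c) <= 2 * Rabs (tau - 1) / (k ^ 2 * X ^ 2) ^ 2.
Proof.
  intros Hk Hm HX Hc HkX. pose proof (Rabs_pos tau).
  assert (Hkc : k ^ 2 * X ^ 2 <= k ^ 2 * c) by (apply Rmult_le_compat_l; nra).
  unfold gc, chi_gt. destruct Rlt_dec as [h|h]; [|lra].
  replace (1 / (k ^ 2 * c + tau)) with (/ (k ^ 2 * c + tau)) by (field; pose proof (abs_between tau); lra).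
  eapply Rle_trans. apply psf_like_bound. lra.
  unfold Rdiv. apply Rmult_le_compat_l. pose proof (Rabs_pos (tau - 1)); lra.
  apply Rinv_le_contravar. nra. nra.
Qed.

Lemma Outs_bound k mu tau N : 0 < k -> 0 < mu -> 2 * Rabs tau + 2 + mu <= k ^ 2 * INR N ^ 2 ->
  Rabs (Outs k mu tau N) <= (2 * INR N + 1) * ((2 * INR N + 1) * (2 * Rabs (tau - 1) / (k ^ 2 * INR N ^ 2) ^ 2)).
Proof.
  intros Hk Hm HN. unfold Outs. apply zsum_bound. intros a. apply zsum_bound. intros b.
  unfold indle. destruct Rle_dec as [h|h].
  - rewrite Rminus_diag, Rmult_0_l, Rabs_R0. apply Rdiv_le_0_compat. pose proof (Rabs_pos (tau - 1)); lra.
    apply pow_lt. pose proof (Rabs_pos tau). lra.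
  - replace (1 - 0) with 1 by ring. rewrite Rmult_1_l.
    apply gc_bound; auto. apply pos_INR. rewrite mult_INR in h. lra.
Qed.

Definition NthL (L mu tau : R) : R :=
  let k := 2 * PI / L in let q := Rabs (tau - 1) in
  xj k mu + 1 + (2 * Rabs tau + 2 + mu) / k ^ 2 + (14 * q / k ^ 4 + q * L ^ 2 / (4 * PI * k ^ 2)).

Lemma eps_small L mu tau N : 0 < L -> 0 < mu -> - mu < tau -> NthL L mu tau <= INR N ->
  let k := 2 * PI / L in
  xj k mu < INR N /\
  (/ L ^ 2 * (Rabs (Acount N (INR (N * N)) - PI * INR N ^ 2) * Rabs (psf k tau (INR N)) + Rabs (Outs k mu tau N))
       + / (4 * PI) * Rabs (ln (k ^ 2 * INR N ^ 2 + 1) - ln (k ^ 2 * INR N ^ 2 + tau))) <= 2 / L ^ 2.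
Proof.
  intros HL Hm Ht HN k. pose proof PI_RGT_0.
  assert (Hk : 0 < k) by (unfold k; apply Rdiv_lt_0_compat; lra).
  destruct (xj_prop k mu Hk Hm) as [X1 X2].
  set (q := Rabs (tau - 1)). assert (Hq : 0 <= q) by apply Rabs_pos.
  pose proof (Rabs_pos tau).
  set (Z := 14 * q / k ^ 4 + q * L ^ 2 / (4 * PI * k ^ 2)).
  assert (HZ : 0 <= Z).
  { unfold Z. assert (0 < k^4) by (apply pow_lt; lra). assert (0 < 4*PI*k^2) by (assert (0<k^2) by (apply pow_lt; lra); nra).
    assert (0 <= q * L^2) by (apply Rmult_le_pos; [lra|apply pow2_ge_0]).
    apply Rplus_le_le_0_compat; apply Rdiv_le_0_compat; lra. }
  assert (HT : 0 <= (2 * Rabs tau + 2 + mu) / k ^ 2) by (apply Rdiv_le_0_compat; [lra| apply pow_lt; lra]).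
  unfold NthL in HN. fold k q in HN. fold Z in HN.
  set (n := INR N) in *.
  assert (Hn1 : 1 <= n) by lra.
  assert (Hnn : n <= n ^ 2) by nra.
  split. lra.
  set (s := k ^ 2 * n ^ 2).
  assert (Hk2 : 0 < k ^ 2) by (apply pow_lt; lra).
  assert (Hs : 2 * Rabs tau + 2 + mu <= s).
  { unfold s. assert ((2 * Rabs tau + 2 + mu) / k ^ 2 <= n ^ 2) by lra.
    apply Rmult_le_compat_l with (r := k^2) in H1; [|lra].
    replace (k ^ 2 * ((2 * Rabs tau + 2 + mu) / k ^ 2)) with (2 * Rabs tau + 2 + mu) in H1 by (field; lra). lra. }
  assert (Hs0 : 0 < s) by lra.
  assert (G1 : Rabs (Acount N (INR (N * N)) - PI * n ^ 2) <= 4 * n + 1).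
  { rewrite mult_INR. fold n. replace (n * n) with (n ^ 2) by ring.
    replace (4 * n + 1) with (4 * sqrt (n ^ 2) + 1) by (rewrite sqrt_pow2; auto; lra).
    apply gauss. apply pow2_ge_0. fold n. lra. }
  assert (G2 : Rabs (psf k tau n) <= 2 * q / s ^ 2) by (unfold psf; fold s; apply psf_like_bound; lra).
  pose proof (Outs_bound k mu tau N Hk Hm ltac:(fold n; fold s; lra)) as G3. fold n s q in G3.
  pose proof (ln_diff_bound s tau ltac:(lra)) as G4. fold q in G4.
  assert (Hw : 0 <= 2 * q / s ^ 2) by (apply Rdiv_le_0_compat; [lra| apply pow_lt; lra]).
  assert (B1 : Rabs (Acount N (INR (N * N)) - PI * n ^ 2) * Rabs (psf k tau n) + Rabs (Outs k mu tau N)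
     <= 14 * n ^ 2 * (2 * q / s ^ 2)).
  { assert (Rabs (Acount N (INR (N * N)) - PI * n ^ 2) * Rabs (psf k tau n) <= (4 * n + 1) * (2 * q / s ^ 2)).
    { apply Rmult_le_compat; auto; apply Rabs_pos. }
    nra. }
  assert (HL2 : 0 < / L ^ 2) by (apply Rinv_0_lt_compat, pow_lt; lra).
  assert (HPi : 0 < / (4 * PI)) by (apply Rinv_0_lt_compat; lra).
  assert (B2 : / L ^ 2 * (14 * n ^ 2 * (2 * q / s ^ 2)) + / (4 * PI) * (2 * q / s) = 2 / L ^ 2 * (Z / n ^ 2)).
  { unfold Z, s, k. field. repeat split; lra. }
  assert (B3 : Z / n ^ 2 <= 1).
  { apply Rmult_le_reg_r with (n ^ 2). lra. unfold Rdiv. rewrite Rmult_assoc, Rinv_l by lra. lra. }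
  assert (2 / L ^ 2 * (Z / n ^ 2) <= 2 / L ^ 2).
  { rewrite <- (Rmult_1_r (2 / L ^ 2)) at 2. apply Rmult_le_compat_l. apply Rdiv_le_0_compat. lra. apply pow_lt; lra. auto. }
  assert (/ L ^ 2 * (Rabs (Acount N (INR (N * N)) - PI * n ^ 2) * Rabs (psf k tau n) + Rabs (Outs k mu tau N)) <= / L ^ 2 * (14 * n ^ 2 * (2 * q / s ^ 2)))
    by (apply Rmult_le_compat_l; lra).
  assert (/ (4 * PI) * Rabs (ln (s + 1) - ln (s + tau)) <= / (4 * PI) * (2 * q / s)) by (apply Rmult_le_compat_l; lra).
  fold s. lra.
Qed.

Lemma sq_sum_S F N : sq_sum F (S N) = sq_sum F N +
  (zsum (fun b => F (Z.of_nat (S N)) b) N + zsum (fun b => F (- Z.of_nat (S N))%Z b) N)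
  + zsum (fun a => F a (Z.of_nat (S N)) + F a (- Z.of_nat (S N))%Z) (S N).
Proof.
  rewrite !sq_sum_zsum.
  rewrite (zsum_ext (fun a => zsum (fun b => F a b) (S N))
     (fun a => zsum (fun b => F a b) N + (F a (Z.of_nat (S N)) + F a (- Z.of_nat (S N))%Z))).
  2:{ intros a. rewrite zsum_S. ring. }
  rewrite zsum_plus. rewrite zsum_S. ring.
Qed.

Lemma exists_nat_ge X : exists N : nat, X <= INR N.
Proof.
  destruct (INR_archimed 1 X ltac:(lra)) as [n Hn]. exists n. lra.
Qed.

Lemma shell_bound L mu tau N : 0 < L -> 0 < mu -> - mu < tau -> NthL L mu tau <= INR N ->
  Rabs (G_partial L (-1) mu tau (S N) - G_partial L (-1) mu tau N)
   <= 16 * Rabs (tau - 1) / (L ^ 2 * (2 * PI / L) ^ 4) * (/ INR N - / INR (S N)).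
Proof.
  intros HL Hm Ht HN. pose proof PI_RGT_0.
  set (k := 2 * PI / L).
  assert (Hk : 0 < k) by (unfold k; apply Rdiv_lt_0_compat; lra).
  destruct (xj_prop k mu Hk Hm) as [X1 X2].
  set (q := Rabs (tau - 1)). assert (Hq : 0 <= q) by apply Rabs_pos.
  pose proof (Rabs_pos tau).
  assert (HZ : 0 <= 14 * q / k ^ 4 + q * L ^ 2 / (4 * PI * k ^ 2)).
  { assert (0 < k^4) by (apply pow_lt; lra). assert (0 < 4*PI*k^2) by (assert (0<k^2) by (apply pow_lt; lra); nra).
    assert (0 <= q * L^2) by (apply Rmult_le_pos; [lra|apply pow2_ge_0]).
    apply Rplus_le_le_0_compat; apply Rdiv_le_0_compat; lra. }
  assert (HT : 0 <= (2 * Rabs tau + 2 + mu) / k ^ 2) by (apply Rdiv_le_0_compat; [lra| apply pow_lt; lra]).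
  unfold NthL in HN. fold k q in HN.
  set (n := INR N) in *.
  assert (Hn1 : 1 <= n) by lra.
  assert (Hk2 : 0 < k ^ 2) by (apply pow_lt; lra).
  set (n1 := INR (S N)). assert (En1 : n1 = n + 1) by (unfold n1, n; apply S_INR).
  set (s := k ^ 2 * n1 ^ 2).
  assert (Hs : 2 * Rabs tau + 2 + mu <= s).
  { unfold s. assert ((2 * Rabs tau + 2 + mu) / k ^ 2 <= n1 ^ 2) by nra.
    apply Rmult_le_compat_l with (r := k^2) in H1; [|lra].
    replace (k ^ 2 * ((2 * Rabs tau + 2 + mu) / k ^ 2)) with (2 * Rabs tau + 2 + mu) in H1 by (field; lra). lra. }
  set (C1 := 2 * q / s ^ 2).
  assert (HC : forall a b, n1 ^ 2 <= cp a b -> Rabs (G_term L (-1) mu tau a b) <= C1).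
  { intros a b Hab. rewrite G_term_gc. fold k. apply gc_bound; auto. unfold n1; apply pos_INR. }
  assert (Hn1sq : IZR (Z.of_nat (S N)) ^ 2 = n1 ^ 2) by (unfold n1; rewrite INR_IZR_INZ; auto).
  assert (Hn1sq' : IZR (- Z.of_nat (S N)) ^ 2 = n1 ^ 2) by (unfold n1; rewrite IZR_opp_sq; auto).
  unfold G_partial. rewrite sq_sum_S.
  replace (/ L ^ 2 * (sq_sum (G_term L (-1) mu tau) N +
     (zsum (fun b => G_term L (-1) mu tau (Z.of_nat (S N)) b) N +
      zsum (fun b => G_term L (-1) mu tau (- Z.of_nat (S N))%Z b) N) +
     zsum (fun a => G_term L (-1) mu tau a (Z.of_nat (S N)) + G_term L (-1) mu tau a (- Z.of_nat (S N))%Z) (S N)) -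
     / L ^ 2 * sq_sum (G_term L (-1) mu tau) N)
   with (/ L ^ 2 * ((zsum (fun b => G_term L (-1) mu tau (Z.of_nat (S N)) b) N +
      zsum (fun b => G_term L (-1) mu tau (- Z.of_nat (S N))%Z b) N) +
     zsum (fun a => G_term L (-1) mu tau a (Z.of_nat (S N)) + G_term L (-1) mu tau a (- Z.of_nat (S N))%Z) (S N))) by ring.
  assert (E1 : Rabs (zsum (fun b => G_term L (-1) mu tau (Z.of_nat (S N)) b) N) <= (2 * n + 1) * C1).
  { apply zsum_bound. intros b. apply HC. unfold cp. rewrite Hn1sq. pose proof (pow2_ge_0 (IZR b)). lra. }
  assert (E2 : Rabs (zsum (fun b => G_term L (-1) mu tau (- Z.of_nat (S N))%Z b) N) <= (2 * n + 1) * C1).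
  { apply zsum_bound. intros b. apply HC. unfold cp. rewrite Hn1sq'. pose proof (pow2_ge_0 (IZR b)). lra. }
  assert (E3 : Rabs (zsum (fun a => G_term L (-1) mu tau a (Z.of_nat (S N)) + G_term L (-1) mu tau a (- Z.of_nat (S N))%Z) (S N))
     <= (2 * n1 + 1) * (2 * C1)).
  { apply zsum_bound. intros a. eapply Rle_trans. apply Rabs_triang.
    assert (Rabs (G_term L (-1) mu tau a (Z.of_nat (S N))) <= C1).
    { apply HC. unfold cp. rewrite Hn1sq. pose proof (pow2_ge_0 (IZR a)). lra. }
    assert (Rabs (G_term L (-1) mu tau a (- Z.of_nat (S N))%Z) <= C1).
    { apply HC. unfold cp. rewrite Hn1sq'. pose proof (pow2_ge_0 (IZR a)). lra. }
    lra. }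
  assert (HL2 : 0 < / L ^ 2) by (apply Rinv_0_lt_compat, pow_lt; lra).
  rewrite Rabs_mult, (Rabs_right (/ L ^ 2)) by lra.
  assert (HC0 : 0 <= C1) by (unfold C1; apply Rdiv_le_0_compat; [lra| apply pow_lt; lra]).
  assert (Tot : Rabs ((zsum (fun b => G_term L (-1) mu tau (Z.of_nat (S N)) b) N +
      zsum (fun b => G_term L (-1) mu tau (- Z.of_nat (S N))%Z b) N) +
     zsum (fun a => G_term L (-1) mu tau a (Z.of_nat (S N)) + G_term L (-1) mu tau a (- Z.of_nat (S N))%Z) (S N))
     <= (8 * n + 8) * C1).
  { eapply Rle_trans. apply Rabs_triang. eapply Rle_trans. apply Rplus_le_compat_r. apply Rabs_triang.
    rewrite En1 in E3. lra. }
  eapply Rle_trans. apply Rmult_le_compat_l. lra. exact Tot.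
  (* (8n+8) C1 / L^2 <= D (1/n - 1/(n+1)) *)
  fold n1. rewrite En1.
  assert (Ec : / L ^ 2 * ((8 * n + 8) * C1) = 16 * q / (L ^ 2 * k ^ 4) * / (n + 1) ^ 3).
  { unfold C1, s. rewrite En1. field. repeat split; lra. }
  rewrite Ec.
  replace (/ n - / (n + 1)) with (/ (n * (n + 1))) by (field; lra).
  apply Rmult_le_compat_l. apply Rdiv_le_0_compat. lra. apply Rmult_lt_0_compat. apply pow_lt; lra. apply pow_lt; lra.
  apply Rinv_le_contravar. nra. nra.
Qed.

Lemma cauchy_tel L mu tau N1 : 0 < L -> 0 < mu -> - mu < tau -> NthL L mu tau <= INR N1 ->
  forall d m, (N1 <= m)%nat ->
  Rabs (G_partial L (-1) mu tau (m + d) - G_partial L (-1) mu tau m)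
   <= 16 * Rabs (tau - 1) / (L ^ 2 * (2 * PI / L) ^ 4) * (/ INR m - / INR (m + d)).
Proof.
  intros HL Hm Ht HN d. induction d; intros m Hmm.
  - rewrite Nat.add_0_r. replace (G_partial L (-1) mu tau m - G_partial L (-1) mu tau m) with 0 by ring.
    rewrite Rabs_R0. lra.
  - assert (Hth : NthL L mu tau <= INR (m + d)) by (eapply Rle_trans; [exact HN| apply le_INR; lia]).
    pose proof (shell_bound L mu tau (m + d) HL Hm Ht Hth) as SB.
    replace (m + S d)%nat with (S (m + d)) by lia.
    pose proof (IHd m Hmm) as IH.
    replace (G_partial L (-1) mu tau (S (m + d)) - G_partial L (-1) mu tau m) with
      ((G_partial L (-1) mu tau (S (m + d)) - G_partial L (-1) mu tau (m + d)) + (G_partial L (-1) mu tau (m + d) - G_partial L (-1) mu tau m)) by ring.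
    eapply Rle_trans. apply Rabs_triang. lra.
Qed.

Lemma lim_le (u : nat -> R) l T B : Un_cv u l ->
  (exists N0, forall n, (n >= N0)%nat -> Rabs (u n - T) <= B) -> Rabs (l - T) <= B.
Proof.
  intros Hu [N0 HN0]. destruct (Rle_or_lt (Rabs (l - T)) B) as [h|h]; auto.
  destruct (Hu (Rabs (l - T) - B) ltac:(lra)) as [N1 HN1].
  set (n := Nat.max N0 N1).
  pose proof (HN0 n ltac:(lia)). pose proof (HN1 n ltac:(lia)). unfold Rdist in H0.
  pose proof (Rabs_triang (u n - T) (l - u n)). replace (u n - T + (l - u n)) with (l - T) in H1 by ring.
  rewrite <- Rabs_Ropp in H0. replace (- (u n - l)) with (l - u n) in H0 by ring. lra.
Qed.

Lemma core L mu tau : 0 < L -> 0 < mu -> - mu < tau ->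
  exists G, Un_cv (G_partial L (-1) mu tau) G /\
    Rabs (G - / (4 * PI) * ln (mu + tau)) <= Kconst tau mu L / L.
Proof.
  intros HL Hm Ht. pose proof PI_RGT_0.
  destruct (exists_nat_ge (NthL L mu tau)) as [N1 HN1].
  assert (Hn1 : 1 <= INR N1).
  { unfold NthL in HN1.
    set (k := 2 * PI / L) in *. assert (Hk : 0 < k) by (unfold k; apply Rdiv_lt_0_compat; lra).
    destruct (xj_prop k mu Hk Hm) as [X1 X2].
    set (q := Rabs (tau - 1)) in *. assert (Hq : 0 <= q) by apply Rabs_pos.
    pose proof (Rabs_pos tau).
    assert (0 <= 14 * q / k ^ 4 + q * L ^ 2 / (4 * PI * k ^ 2)).
    { assert (0 < k^4) by (apply pow_lt; lra). assert (0 < 4*PI*k^2) by (assert (0<k^2) by (apply pow_lt; lra); nra).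
      assert (0 <= q * L^2) by (apply Rmult_le_pos; [lra|apply pow2_ge_0]).
      apply Rplus_le_le_0_compat; apply Rdiv_le_0_compat; lra. }
    assert (0 <= (2 * Rabs tau + 2 + mu) / k ^ 2) by (apply Rdiv_le_0_compat; [lra| apply pow_lt; lra]).
    lra. }
  set (D := 16 * Rabs (tau - 1) / (L ^ 2 * (2 * PI / L) ^ 4)).
  assert (HD : 0 <= D).
  { unfold D. apply Rdiv_le_0_compat. pose proof (Rabs_pos (tau - 1)); lra.
    apply Rmult_lt_0_compat; apply pow_lt; [lra| apply Rdiv_lt_0_compat; lra]. }
  assert (Cc : Cauchy_crit (G_partial L (-1) mu tau)).
  { intros eps He.
    destruct (exists_nat_ge (INR N1 + D / eps + 1)) as [N2 HN2].
    exists N2. intros n m Hn Hmm.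
    pose proof (Rdiv_le_0_compat D eps HD He) as HDe0.
    assert (HN2' : INR N1 <= INR N2) by lra.
    apply INR_le in HN2'.
    assert (HN1n : (1 <= N1)%nat) by (apply INR_le; rewrite INR_1; lra).
    assert (HDe : D / INR N2 < eps).
    { assert (0 < INR N2) by lra. apply Rmult_lt_reg_r with (INR N2); auto.
      unfold Rdiv. rewrite Rmult_assoc, Rinv_l by lra.
      assert (D / eps < INR N2) by lra. apply Rmult_lt_compat_r with (r := eps) in H1; auto.
      unfold Rdiv in H1. rewrite Rmult_assoc, Rinv_l in H1 by lra. lra. }
    unfold Rdist.
    destruct (le_ge_dec m n) as [h|h].
    - replace n with (m + (n - m))%nat by lia.
      pose proof (cauchy_tel L mu tau N1 HL Hm Ht HN1 (n - m) m ltac:(lia)) as C. fold D in C.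
      assert (INR N2 <= INR m) by (apply le_INR; lia).
      assert (0 < INR (m + (n - m))) by (apply lt_0_INR; lia).
      assert (0 <= / INR (m + (n - m))) by (left; apply Rinv_0_lt_compat; auto).
      assert (/ INR m <= / INR N2) by (apply Rinv_le_contravar; lra).
      assert (D * (/ INR m - / INR (m + (n - m))) <= D / INR N2).
      { unfold Rdiv. apply Rmult_le_compat_l; auto. lra. }
      lra.
    - replace m with (n + (m - n))%nat by lia.
      pose proof (cauchy_tel L mu tau N1 HL Hm Ht HN1 (m - n) n ltac:(lia)) as C. fold D in C.
      rewrite <- Rabs_Ropp. replace (- (G_partial L (-1) mu tau n - G_partial L (-1) mu tau (n + (m - n))))
        with (G_partial L (-1) mu tau (n + (m - n)) - G_partial L (-1) mu tau n) by ring.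
      assert (INR N2 <= INR n) by (apply le_INR; lia).
      assert (0 < INR (n + (m - n))) by (apply lt_0_INR; lia).
      assert (0 <= / INR (n + (m - n))) by (left; apply Rinv_0_lt_compat; auto).
      assert (/ INR n <= / INR N2) by (apply Rinv_le_contravar; lra).
      assert (D * (/ INR n - / INR (n + (m - n))) <= D / INR N2).
      { unfold Rdiv. apply Rmult_le_compat_l; auto. lra. }
      lra. }
  destruct (Rcomplete.R_complete _ Cc) as [G HG].
  exists G. split; auto.
  apply (lim_le _ G _ _ HG). exists N1. intros n Hn.
  assert (HNn : NthL L mu tau <= INR n) by (eapply Rle_trans; [exact HN1| apply le_INR; lia]).
  destruct (eps_small L mu tau n HL Hm Ht HNn) as [Hx He].
  pose proof (main_bound L mu tau n HL Hm Ht Hx) as MB. cbv zeta in MB.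
  pose proof (Btot_K L mu tau HL Hm Ht).
  lra.
Qed.

Lemma sq_sum_scal c F N : sq_sum (fun a b => c * F a b) N = c * sq_sum F N.
Proof.
  rewrite !sq_sum_zsum. rewrite <- zsum_scal. apply zsum_ext. intros a. apply zsum_scal.
Qed.

Lemma sq_sum_ext F1 F2 N : (forall a b, F1 a b = F2 a b) -> sq_sum F1 N = sq_sum F2 N.
Proof. intros H. rewrite !sq_sum_zsum. apply zsum_ext. intros a. apply zsum_ext. intros b. apply H. Qed.

Lemma G_term_scale L EB mu tau a b : 0 < L -> EB < 0 -> 0 < mu -> - mu < tau ->
  G_term L EB mu tau a b =
  / Rabs EB * G_term (L * sqrt (Rabs EB)) (-1) (mu / Rabs EB) (tau / Rabs EB) a b.
Proof.
  intros HL HE Hm Ht. rewrite Rabs_left by auto. set (e := - EB).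
  assert (He : 0 < e) by (unfold e; lra).
  pose proof (sqrt_lt_R0 e He). pose proof (sqrt_sqrt e (Rlt_le _ _ He)).
  assert (Hk : ksq (L * sqrt e) a b = ksq L a b / e).
  { unfold ksq. assert (E : (2 * PI / (L * sqrt e)) ^ 2 = (2*PI/L)^2 / (sqrt e * sqrt e)) by (field; lra).
    rewrite E, H0. field. lra. }
  unfold G_term. rewrite Hk.
  assert (Hc : chi_gt (mu / e) (ksq L a b / e) = chi_gt mu (ksq L a b)).
  { unfold chi_gt. destruct (Rlt_dec (mu / e) (ksq L a b / e)) as [h|h]; destruct (Rlt_dec mu (ksq L a b)) as [h'|h']; auto.
    - exfalso. apply h'. apply Rmult_lt_reg_r with (/ e). apply Rinv_0_lt_compat; auto. exact h.
    - exfalso. apply h. unfold Rdiv. apply Rmult_lt_compat_r. apply Rinv_0_lt_compat; auto. auto. }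
  rewrite Hc.
  assert (Hq : 0 <= ksq L a b) by (unfold ksq; pose proof (pow2_ge_0 (IZR a)); pose proof (pow2_ge_0 (IZR b)); pose proof (pow2_ge_0 (2 * PI / L)); nra).
  unfold e. replace (ksq L a b - EB) with (ksq L a b + - EB) by ring.
  unfold chi_gt. destruct Rlt_dec as [h|h].
  - field. repeat split; try lra.
  - unfold Rdiv. rewrite !Rmult_0_l. field. lra.
Qed.

Theorem lemma5p2 (EB mu tau L : R) (hEB : EB < 0) (hmu : 0 < mu)
  (htau : - mu < tau) (hL : 0 < L) :
  exists G : R,
    Un_cv (G_partial L EB mu tau) G /\
    Rabs (G - / (4 * PI) * ln (mu / Rabs EB + tau / Rabs EB))
      <= Kconst (tau / Rabs EB) (mu / Rabs EB) (L * sqrt (Rabs EB))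
         / (L * sqrt (Rabs EB)).
Proof.
  assert (He : 0 < Rabs EB) by (rewrite Rabs_left; lra).
  pose proof (sqrt_lt_R0 _ He).
  assert (HL' : 0 < L * sqrt (Rabs EB)) by nra.
  assert (Hm' : 0 < mu / Rabs EB) by (apply Rdiv_lt_0_compat; auto).
  assert (Ht' : - (mu / Rabs EB) < tau / Rabs EB).
  { unfold Rdiv. rewrite Ropp_mult_distr_l. apply Rmult_lt_compat_r. apply Rinv_0_lt_compat; auto. lra. }
  destruct (core (L * sqrt (Rabs EB)) (mu / Rabs EB) (tau / Rabs EB) HL' Hm' Ht') as [G [HG HB]].
  exists G. split; auto.
  assert (Heq : forall N, G_partial L EB mu tau N = G_partial (L * sqrt (Rabs EB)) (-1) (mu / Rabs EB) (tau / Rabs EB) N).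
  { intros N. unfold G_partial.
    rewrite (sq_sum_ext (G_term L EB mu tau) (fun a b => / Rabs EB * G_term (L * sqrt (Rabs EB)) (-1) (mu / Rabs EB) (tau / Rabs EB) a b)).
    2:{ intros a b. apply G_term_scale; auto. }
    rewrite sq_sum_scal.
    assert (E : (L * sqrt (Rabs EB)) ^ 2 = L ^ 2 * Rabs EB).
    { replace ((L * sqrt (Rabs EB)) ^ 2) with (L ^ 2 * (sqrt (Rabs EB) * sqrt (Rabs EB))) by ring.
      rewrite sqrt_sqrt; lra. }
    rewrite E. field. lra. }
  intros eps Heps. destruct (HG eps Heps) as [N0 HN0]. exists N0. intros n Hn. rewrite Heq. auto.
Qed.
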